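(* Let $\omega$ be a regular weight. If $T\in B(X)$ and $x\in X$ satisfy $\|e^{tT}x\|\le C_x\,\omega(t)$ for all $t\in\mathbb{R}$ and some constant $C_x>0$, then $\sigma_T(x)\subset i\mathbb{R}$.
   Context: $X$ is a complex Banach space, $B(X)$ the bounded linear operators on $X$. A weight is a continuous function $\omega:\mathbb{R}\to[1,\infty)$ with $\omega(t+s)\le\omega(t)\omega(s)$ for all $t,s$; it is regular if $\int_{\mathbb{R}}\frac{\log\omega(t)}{1+t^2}\,dt<\infty$. For $T\in B(X)$ and $x\in X$, $\rho_T(x)$ is the set of $\lambda\in\mathbb{C}$ having an open neighbourhood $U$ and an analytic $u:U\to X$ with $(zI-T)u(z)=x$ on $U$; the local spectrum is $\sigma_T(x)=\mathbb{C}\setminus\rho_T(x)$. *)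

(* Defs.v *)
From Stdlib Require Import Reals Arith.
Open Scope R_scope.

Definition Complex : Type := (R * R)%type.
Definition Re (z : Complex) : R := fst z.
Definition Im (z : Complex) : R := snd z.
Definition RtoC (r : R) : Complex := (r, 0).
Definition C0 : Complex := (0, 0).
Definition C1 : Complex := (1, 0).
Definition Cadd (z w : Complex) : Complex := (fst z + fst w, snd z + snd w).
Definition Copp (z : Complex) : Complex := (- fst z, - snd z).
Definition Csub (z w : Complex) : Complex := Cadd z (Copp w).
Definition Cmul (z w : Complex) : Complex :=
  (fst z * fst w - snd z * snd w, fst z * snd w + snd z * fst w).
Definition Cmod (z : Complex) : R := sqrt (fst z ^ 2 + snd z ^ 2).
Fixpoint Cpow (z : Complex) (n : nat) : Complex :=
  match n with O => C1 | S k => Cmul z (Cpow z k) end.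

Record CBanach := {
  car :> Type;
  vadd : car -> car -> car;
  vzero : car;
  vopp : car -> car;
  vscal : Complex -> car -> car;
  vnorm : car -> R;
  vadd_assoc : forall x y z, vadd x (vadd y z) = vadd (vadd x y) z;
  vadd_comm : forall x y, vadd x y = vadd y x;
  vadd_0 : forall x, vadd x vzero = x;
  vadd_opp : forall x, vadd x (vopp x) = vzero;
  vscal_assoc : forall a b x, vscal a (vscal b x) = vscal (Cmul a b) x;
  vscal_1 : forall x, vscal C1 x = x;
  vscal_distr_v : forall a x y, vscal a (vadd x y) = vadd (vscal a x) (vscal a y);
  vscal_distr_c : forall a b x, vscal (Cadd a b) x = vadd (vscal a x) (vscal b x);
  vnorm_nonneg : forall x, 0 <= vnorm x;
  vnorm_eq0 : forall x, vnorm x = 0 -> x = vzero;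
  vnorm_triangle : forall x y, vnorm (vadd x y) <= vnorm x + vnorm y;
  vnorm_scal : forall a x, vnorm (vscal a x) = Cmod a * vnorm x;
  vcomplete : forall u : nat -> car,
    (forall eps, 0 < eps -> exists N, forall m n, (N <= m)%nat -> (N <= n)%nat ->
        vnorm (vadd (u m) (vopp (u n))) < eps) ->
    exists l, forall eps, 0 < eps -> exists N, forall n, (N <= n)%nat ->
        vnorm (vadd (u n) (vopp l)) < eps
}.

Arguments vadd {_}. Arguments vzero {_}. Arguments vopp {_}.
Arguments vscal {_}. Arguments vnorm {_}.

Definition vsub {X : CBanach} (x y : X) : X := vadd x (vopp y).

Definition vcv {X : CBanach} (u : nat -> X) (l : X) : Prop :=
  forall eps, 0 < eps -> exists N, forall n, (N <= n)%nat -> vnorm (vsub (u n) l) < eps.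

Fixpoint vsum {X : CBanach} (f : nat -> X) (n : nat) : X :=
  match n with O => f O | S k => vadd (vsum f k) (f (S k)) end.

Definition is_bounded_linear {X : CBanach} (T : X -> X) : Prop :=
  (forall x y, T (vadd x y) = vadd (T x) (T y)) /\
  (forall a x, T (vscal a x) = vscal a (T x)) /\
  (exists M, forall x, vnorm (T x) <= M * vnorm x).

Definition exp_op_at {X : CBanach} (T : X -> X) (t : R) (x : X) (y : X) : Prop :=
  vcv (vsum (fun k => vscal (RtoC (t ^ k / INR (Factorial.fact k))) (Nat.iter k T x))) y.

Definition Cball (z0 : Complex) (r : R) (z : Complex) : Prop := Cmod (Csub z z0) < r.

Definition Copen (U : Complex -> Prop) : Prop :=
  forall z, U z -> exists r, 0 < r /\ forall w, Cball z r w -> U w.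

Definition analytic_on {X : CBanach} (U : Complex -> Prop) (u : Complex -> X) : Prop :=
  forall z0, U z0 -> exists r (a : nat -> X), 0 < r /\
    forall z, Cball z0 r z ->
      vcv (vsum (fun k => vscal (Cpow (Csub z z0) k) (a k))) (u z).

Definition local_resolvent {X : CBanach} (T : X -> X) (x : X) (lam : Complex) : Prop :=
  exists (U : Complex -> Prop) (u : Complex -> X),
    Copen U /\ U lam /\ analytic_on U u /\
    forall z, U z -> vsub (vscal z (u z)) (T (u z)) = x.

Definition local_spectrum {X : CBanach} (T : X -> X) (x : X) (lam : Complex) : Prop :=
  ~ local_resolvent T x lam.

Definition is_weight (w : R -> R) : Prop :=
  (forall t, continuity_pt w t) /\
  (forall t, 1 <= w t) /\
  (forall t s, w (t + s) <= w t * w s).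

(* the integrand is continuous and nonnegative, so finiteness of the integral
   over R is boundedness of its integrals over compact intervals *)
Definition is_regular_weight (w : R -> R) : Prop :=
  is_weight w /\
  exists M, forall a b (pr : Riemann_integrable (fun t => ln (w t) / (1 + t ^ 2)) a b),
    RiemannInt pr <= M.

(* Main.v *)
From Stdlib Require Import Reals Lra Lia ClassicalEpsilon Classical.
From Coquelicot Require Import Coquelicot.
Require Import Defs.
Open Scope R_scope.
Notation fact := Factorial.fact.

Lemma Cext (a b : Complex) : fst a = fst b -> snd a = snd b -> a = b.
Proof. destruct a, b; simpl; intros; subst; reflexivity. Qed.

Ltac cring := apply Cext; simpl; ring.

Lemma Cmul_comm a b : Cmul a b = Cmul b a. Proof. cring. Qed.
Lemma Cmul_assoc a b c : Cmul a (Cmul b c) = Cmul (Cmul a b) c. Proof. cring. Qed.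
Lemma Cmul_1l a : Cmul C1 a = a. Proof. unfold C1; cring. Qed.
Lemma Cmul_1r a : Cmul a C1 = a. Proof. unfold C1; cring. Qed.
Lemma Cmul_0l a : Cmul C0 a = C0. Proof. unfold C0; cring. Qed.
Lemma Cadd_comm a b : Cadd a b = Cadd b a. Proof. cring. Qed.
Lemma Cadd_0r a : Cadd a C0 = a. Proof. unfold C0; cring. Qed.
Lemma Cadd_0l a : Cadd C0 a = a. Proof. unfold C0; cring. Qed.
Lemma Cmul_addl a b c : Cmul (Cadd a b) c = Cadd (Cmul a c) (Cmul b c). Proof. cring. Qed.
Lemma Cmul_addr a b c : Cmul c (Cadd a b) = Cadd (Cmul c a) (Cmul c b). Proof. cring. Qed.
Lemma RtoC_mul r s : RtoC (r * s) = Cmul (RtoC r) (RtoC s). Proof. unfold RtoC; cring. Qed.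
Lemma RtoC_add r s : RtoC (r + s) = Cadd (RtoC r) (RtoC s). Proof. unfold RtoC; cring. Qed.
Lemma RtoC_1 : RtoC 1 = C1. Proof. reflexivity. Qed.
Lemma RtoC_0 : RtoC 0 = C0. Proof. reflexivity. Qed.
Lemma Cpow_add z n m : Cpow z (n + m) = Cmul (Cpow z n) (Cpow z m).
Proof. induction n; simpl. now rewrite Cmul_1l. rewrite IHn, Cmul_assoc; auto. Qed.
Lemma Cpow_mul z w n : Cpow (Cmul z w) n = Cmul (Cpow z n) (Cpow w n).
Proof. induction n; simpl. unfold C1; cring. rewrite IHn. destruct z,w. cring. Qed.
Lemma RtoC_pow r n : RtoC (r ^ n) = Cpow (RtoC r) n.
Proof. induction n; simpl. reflexivity. rewrite RtoC_mul, IHn; auto. Qed.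

Lemma Cmod_mul a b : Cmod (Cmul a b) = Cmod a * Cmod b.
Proof. exact (Cmod_mult a b). Qed.
Lemma Cmod_add a b : Cmod (Cadd a b) <= Cmod a + Cmod b.
Proof. exact (Cmod_triangle a b). Qed.
Lemma Cmod_nonneg a : 0 <= Cmod a. Proof. exact (Cmod_ge_0 a). Qed.
Lemma Cmod_RtoC r : Cmod (RtoC r) = Rabs r. Proof. exact (Cmod_R r). Qed.
Lemma Cmod_Copp a : Cmod (Copp a) = Cmod a. Proof. exact (Cmod_opp a). Qed.
Lemma Cmod_pow z n : Cmod (Cpow z n) = Cmod z ^ n.
Proof. induction n; simpl. change (Cmod (RtoC 1) = 1). rewrite Cmod_RtoC. apply Rabs_R1.
 rewrite Cmod_mul, IHn; auto. Qed.
Lemma Cmod_C1 : Cmod C1 = 1. Proof. rewrite <- RtoC_1, Cmod_RtoC. apply Rabs_R1. Qed.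
Lemma Cmod_C0 : Cmod C0 = 0. Proof. rewrite <- RtoC_0, Cmod_RtoC. apply Rabs_R0. Qed.
Lemma Cmod_eq0 a : Cmod a = 0 -> a = C0. Proof. exact (Cmod_eq_0 a). Qed.
Lemma Re_le_Cmod a : Rabs (fst a) <= Cmod a.
Proof. unfold Cmod. rewrite <- sqrt_Rsqr_abs. apply sqrt_le_1_alt. unfold Rsqr. simpl.
 pose proof (pow2_ge_0 (snd a)). nra. Qed.
Lemma Im_le_Cmod a : Rabs (snd a) <= Cmod a.
Proof. unfold Cmod. rewrite <- sqrt_Rsqr_abs. apply sqrt_le_1_alt. unfold Rsqr. simpl.
 pose proof (pow2_ge_0 (fst a)). nra. Qed.

Arguments vadd_assoc {_}. Arguments vadd_comm {_}. Arguments vadd_0 {_}. Arguments vadd_opp {_}.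
Arguments vscal_assoc {_}. Arguments vscal_1 {_}. Arguments vscal_distr_v {_}. Arguments vscal_distr_c {_}.
Arguments vnorm_nonneg {_}. Arguments vnorm_eq0 {_}. Arguments vnorm_triangle {_}. Arguments vnorm_scal {_}.
Lemma half_pos e : 0 < e -> 0 < e / 2. Proof. intros; lra. Qed.
Section Vec.
Context {X : CBanach}.
Implicit Types x y z l : X.
Implicit Types u v : nat -> X.

Lemma vadd_0l x : vadd vzero x = x. Proof. rewrite vadd_comm; apply vadd_0. Qed.
Lemma vopp_add_l x : vadd (vopp x) x = vzero. Proof. rewrite vadd_comm; apply vadd_opp. Qed.
Lemma vadd_cancel_l x y z : vadd x y = vadd x z -> y = z.
Proof. intro H. rewrite <- (vadd_0l y), <- (vadd_0l z), <- (vopp_add_l x), <- !vadd_assoc, H. auto. Qed.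
Lemma vadd_eq0 x y : vadd x y = vzero -> y = vopp x.
Proof. intro H. apply (vadd_cancel_l x). now rewrite H, vadd_opp. Qed.
Lemma vopp_opp x : vopp (vopp x) = x.
Proof. symmetry. apply vadd_eq0. apply vopp_add_l. Qed.
Lemma vopp_zero : vopp (@vzero X) = vzero.
Proof. symmetry. apply vadd_eq0. apply vadd_0. Qed.
Lemma vopp_vadd x y : vopp (vadd x y) = vadd (vopp x) (vopp y).
Proof. symmetry. apply vadd_eq0.
 rewrite (vadd_comm (vopp x)), vadd_assoc, <- (vadd_assoc x), vadd_opp, vadd_0, vadd_opp; auto. Qed.
Lemma vscal_C0 x : vscal C0 x = vzero.
Proof. apply (vadd_cancel_l (vscal C0 x)). rewrite <- vscal_distr_c, Cadd_0r, vadd_0; auto. Qed.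
Lemma vscal_zero a : vscal a (@vzero X) = vzero.
Proof. apply (vadd_cancel_l (vscal a vzero)). rewrite <- vscal_distr_v, !vadd_0; auto. Qed.
Lemma vscal_opp_c a x : vscal (Copp a) x = vopp (vscal a x).
Proof. apply vadd_eq0. rewrite <- vscal_distr_c. replace (Cadd a (Copp a)) with C0 by (unfold C0; cring).
 apply vscal_C0. Qed.
Lemma vscal_opp_v a x : vscal a (vopp x) = vopp (vscal a x).
Proof. apply vadd_eq0. rewrite <- vscal_distr_v, vadd_opp. apply vscal_zero. Qed.
Lemma vopp_scal x : vopp x = vscal (Copp C1) x.
Proof. rewrite vscal_opp_c, vscal_1; auto. Qed.
Lemma vnorm_opp x : vnorm (vopp x) = vnorm x.
Proof. rewrite vopp_scal, vnorm_scal, Cmod_Copp, Cmod_C1; ring. Qed.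
Lemma vnorm_zero : vnorm (@vzero X) = 0.
Proof. rewrite <- (vscal_C0 vzero), vnorm_scal, Cmod_C0; ring. Qed.
Lemma vsub_self x : vsub x x = vzero. Proof. apply vadd_opp. Qed.
Lemma vsub_0 x : vsub x vzero = x. Proof. unfold vsub; rewrite vopp_zero; apply vadd_0. Qed.
Lemma vsub_eq0 x y : vsub x y = vzero -> x = y.
Proof. unfold vsub; intro H. apply vadd_eq0 in H. rewrite <- (vopp_opp x), <- H, vopp_opp; auto. Qed.
Lemma vnorm_sub_sym x y : vnorm (vsub x y) = vnorm (vsub y x).
Proof. unfold vsub. rewrite <- vnorm_opp, vopp_vadd, vopp_opp, vadd_comm; auto. Qed.
Lemma vsub_add_sub x y z : vadd (vsub x y) (vsub y z) = vsub x z.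
Proof. unfold vsub. rewrite <- vadd_assoc, (vadd_assoc (vopp y)), vopp_add_l, vadd_0l; auto. Qed.
Lemma vnorm_sub_tri x y z : vnorm (vsub x z) <= vnorm (vsub x y) + vnorm (vsub y z).
Proof. rewrite <- (vsub_add_sub x y z). apply vnorm_triangle. Qed.
Lemma vsub_vadd (a b c d : X) : vsub (vadd a b) (vadd c d) = vadd (vsub a c) (vsub b d).
Proof. unfold vsub. rewrite vopp_vadd, <- !vadd_assoc. f_equal. rewrite !vadd_assoc. f_equal. apply vadd_comm. Qed.
Lemma vscal_sub a x y : vscal a (vsub x y) = vsub (vscal a x) (vscal a y).
Proof. unfold vsub. rewrite vscal_distr_v, vscal_opp_v; auto. Qed.
Lemma vsub_scal_c a b x : vsub (vscal a x) (vscal b x) = vscal (Csub a b) x.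
Proof. unfold vsub, Csub. rewrite vscal_distr_c, vscal_opp_c; auto. Qed.
Lemma vadd_sub_r x y : vsub (vadd x y) y = x.
Proof. unfold vsub. rewrite <- vadd_assoc, vadd_opp, vadd_0; auto. Qed.
Lemma vsub_add_r x y : vadd (vsub x y) y = x.
Proof. unfold vsub. rewrite <- vadd_assoc, vopp_add_l, vadd_0; auto. Qed.
Lemma vnorm_rev x y : Rabs (vnorm x - vnorm y) <= vnorm (vsub x y).
Proof. apply Rabs_le. split.
 - pose proof (vnorm_triangle (vsub y x) x). rewrite vsub_add_r in H. rewrite vnorm_sub_sym in H. lra.
 - pose proof (vnorm_triangle (vsub x y) y). rewrite vsub_add_r in H. lra. Qed.
Lemma vscal_real_norm r x : vnorm (vscal (RtoC r) x) = Rabs r * vnorm x.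
Proof. rewrite vnorm_scal, Cmod_RtoC; auto. Qed.

Lemma vcv_unique u l1 l2 : vcv u l1 -> vcv u l2 -> l1 = l2.
Proof. intros H1 H2. apply vsub_eq0, vnorm_eq0. apply Rle_antisym; [|apply vnorm_nonneg].
 apply Rnot_lt_le; intro Hp.
 destruct (H1 _ (half_pos _ Hp)) as [N1 HN1]; destruct (H2 _ (half_pos _ Hp)) as [N2 HN2].
 specialize (HN1 (N1+N2)%nat ltac:(lia)); specialize (HN2 (N1+N2)%nat ltac:(lia)).
 pose proof (vnorm_sub_tri l1 (u (N1+N2)%nat) l2). rewrite (vnorm_sub_sym l1 (u _)) in H. lra. Qed.

Lemma vcv_const l : vcv (fun _ => l) l.
Proof. intros e He; exists O; intros; rewrite vsub_self, vnorm_zero; auto. Qed.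

Lemma vcv_add u v l (m : X) : vcv u l -> vcv v m -> vcv (fun n => vadd (u n) (v n)) (vadd l m).
Proof. intros H1 H2 e He.
 destruct (H1 _ (half_pos _ He)) as [N1 HN1]; destruct (H2 _ (half_pos _ He)) as [N2 HN2].
 exists (N1+N2)%nat; intros n Hn. rewrite vsub_vadd.
 eapply Rle_lt_trans; [apply vnorm_triangle|].
 specialize (HN1 n ltac:(lia)); specialize (HN2 n ltac:(lia)). lra. Qed.

Lemma vcv_scal a u l : vcv u l -> vcv (fun n => vscal a (u n)) (vscal a l).
Proof. intros H e He.
 destruct (H (e / (Cmod a + 1))) as [N HN].
 { apply Rdiv_lt_0_compat; auto. pose proof (Cmod_nonneg a); lra. }
 exists N; intros n Hn. rewrite <- vscal_sub, vnorm_scal. specialize (HN n Hn).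
 pose proof (Cmod_nonneg a). pose proof (vnorm_nonneg (vsub (u n) l)).
 apply Rle_lt_trans with ((Cmod a + 1) * vnorm (vsub (u n) l)). nra.
 apply Rmult_lt_reg_l with (/ (Cmod a + 1)). apply Rinv_0_lt_compat; lra.
 rewrite <- Rmult_assoc, Rinv_l by lra. unfold Rdiv in HN. lra. Qed.

Lemma vcv_opp u l : vcv u l -> vcv (fun n => vopp (u n)) (vopp l).
Proof. intro H. rewrite (vopp_scal l). pose proof (vcv_scal (Copp C1) u l H).
 intros e He. destruct (H0 e He) as [N HN]; exists N; intros. rewrite (vopp_scal (u n)); auto. Qed.

Lemma vcv_sub u v l (m : X) : vcv u l -> vcv v m -> vcv (fun n => vsub (u n) (v n)) (vsub l m).
Proof. intros; apply vcv_add; auto; apply vcv_opp; auto. Qed.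

Lemma vcv_ext u v l : (forall n, u n = v n) -> vcv u l -> vcv v l.
Proof. intros E H e He; destruct (H e He) as [N HN]; exists N; intros; rewrite <- E; auto. Qed.

Lemma vcv_ext_ev u v l N0 : (forall n, (N0 <= n)%nat -> u n = v n) -> vcv u l -> vcv v l.
Proof. intros E H e He; destruct (H e He) as [N HN]; exists (N + N0)%nat; intros.
 rewrite <- E by lia; apply HN; lia. Qed.

Lemma vcv_shift u l : vcv u l -> vcv (fun n => u (S n)) l.
Proof. intros H e He; destruct (H e He) as [N HN]; exists N; intros; apply HN; lia. Qed.

Lemma vcv_unshift u l : vcv (fun n => u (S n)) l -> vcv u l.
Proof. intros H e He; destruct (H e He) as [N HN]; exists (S N); intros.
 destruct n; [lia|]. apply HN; lia. Qed.

Lemma vcv_norm_le u l B : vcv u l -> (forall n, vnorm (u n) <= B) -> vnorm l <= B.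
Proof. intros H Hb. apply Rnot_lt_le; intro Hc.
 destruct (H (vnorm l - B)) as [N HN]; [lra|]. specialize (HN N (le_n _)).
 pose proof (vnorm_rev l (u N)). rewrite vnorm_sub_sym in H0. specialize (Hb N).
 apply Rabs_le_between in H0 || idtac. pose proof (Rle_abs (vnorm l - vnorm (u N))). lra. Qed.

Lemma vcv_norm_le_ev u l B N0 : vcv u l -> (forall n, (N0 <= n)%nat -> vnorm (u n) <= B) -> vnorm l <= B.
Proof. intros H Hb. apply (vcv_norm_le (fun n => u (n + N0)%nat)). 
 intros e He; destruct (H e He) as [N HN]; exists N; intros; apply HN; lia.
 intros; apply Hb; lia. Qed.

Lemma vcv_norm u l : vcv u l -> Un_cv (fun n => vnorm (u n)) (vnorm l).
Proof. intros H e He; destruct (H e He) as [N HN]; exists N; intros n Hn.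
 unfold Rdist. eapply Rle_lt_trans; [apply vnorm_rev|]; auto. Qed.

Lemma vcv_scal_c (c : nat -> Complex) (c0 : Complex) x :
  (forall e, 0 < e -> exists N, forall n, (N <= n)%nat -> Cmod (Csub (c n) c0) < e) ->
  vcv (fun n => vscal (c n) x) (vscal c0 x).
Proof. intros H e He.
 destruct (H (e / (vnorm x + 1))) as [N HN].
 { apply Rdiv_lt_0_compat; auto. pose proof (vnorm_nonneg x); lra. }
 exists N; intros n Hn. rewrite vsub_scal_c, vnorm_scal. specialize (HN n Hn).
 pose proof (vnorm_nonneg x). pose proof (Cmod_nonneg (Csub (c n) c0)).
 apply Rle_lt_trans with (Cmod (Csub (c n) c0) * (vnorm x + 1)). nra.
 apply Rmult_lt_reg_r with (/ (vnorm x + 1)). apply Rinv_0_lt_compat; lra.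
 rewrite Rmult_assoc, Rinv_r by lra. unfold Rdiv in HN. lra. Qed.

Definition vCauchy (u : nat -> X) := forall eps, 0 < eps -> exists N, forall m n, (N <= m)%nat -> (N <= n)%nat ->
        vnorm (vsub (u m) (u n)) < eps.

Lemma vCauchy_cv u : vCauchy u -> exists l, vcv u l.
Proof. intro H. destruct (vcomplete X u H) as [l Hl]. exists l; exact Hl. Qed.

Definition vlim (u : nat -> X) : X := epsilon (inhabits vzero) (fun l => vcv u l).

Lemma vlim_spec u : (exists l, vcv u l) -> vcv u (vlim u).
Proof. intro H. unfold vlim. apply epsilon_spec. exact H. Qed.

Lemma vlim_eq u l : vcv u l -> vlim u = l.
Proof. intro H. apply (vcv_unique u); auto. apply vlim_spec; eauto. Qed.

End Vec.

Definition vser {X : CBanach} (f : nat -> X) (l : X) := vcv (vsum f) l.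

Lemma sum_nonneg (f : nat -> R) n : (forall k, 0 <= f k) -> 0 <= sum_f_R0 f n.
Proof. intros; apply cond_pos_sum; auto. Qed.
Lemma sum_mono_n (f : nat -> R) n m : (forall k, 0 <= f k) -> (n <= m)%nat -> sum_f_R0 f n <= sum_f_R0 f m.
Proof. intros Hf Hnm. induction Hnm. lra. simpl. pose proof (Hf (S m)); lra. Qed.

Section Ser.
Context {X : CBanach}.
Implicit Types x y z l : X.
Implicit Types u v f g : nat -> X.

Lemma vsum_ext f g n : (forall k, (k <= n)%nat -> f k = g k) -> vsum f n = vsum g n.
Proof. induction n; simpl; intros H. apply H; lia. rewrite IHn, H; auto. Qed.

Lemma vsum_add f g n : vsum (fun k => vadd (f k) (g k)) n = vadd (vsum f n) (vsum g n).
Proof. induction n; simpl; auto. rewrite IHn. rewrite <- !vadd_assoc. f_equal.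
 rewrite !vadd_assoc. f_equal. apply vadd_comm. Qed.

Lemma vsum_lin (L : X -> X) f n : (forall a b, L (vadd a b) = vadd (L a) (L b)) ->
  L (vsum f n) = vsum (fun k => L (f k)) n.
Proof. intro HL. induction n; simpl; auto. rewrite HL, IHn; auto. Qed.

Lemma vsum_scal a f n : vscal a (vsum f n) = vsum (fun k => vscal a (f k)) n.
Proof. apply vsum_lin. intros; apply vscal_distr_v. Qed.

Lemma vsum_sub f g n : vsum (fun k => vsub (f k) (g k)) n = vsub (vsum f n) (vsum g n).
Proof. unfold vsub. rewrite vsum_add. f_equal. symmetry. apply vsum_lin. intros; apply vopp_vadd. Qed.

Lemma vsum_norm f n : vnorm (vsum f n) <= sum_f_R0 (fun k => vnorm (f k)) n.
Proof. induction n; simpl. lra. eapply Rle_trans; [apply vnorm_triangle|]. lra. Qed.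

Lemma vsum_S f n : vsum f (S n) = vadd (f O) (vsum (fun k => f (S k)) n).
Proof. induction n. reflexivity. change (vsum f (S (S n))) with (vadd (vsum f (S n)) (f (S (S n)))).
 rewrite IHn. simpl. rewrite vadd_assoc; auto. Qed.

Lemma vsum_zero f n : (forall k, (k <= n)%nat -> f k = vzero) -> vsum f n = vzero.
Proof. induction n; simpl; intros H. apply H; lia. rewrite IHn. rewrite H by lia. apply vadd_0. intros; apply H; lia. Qed.

Lemma vsum_const0 n : vsum (fun _ => @vzero X) n = vzero.
Proof. apply vsum_zero; auto. Qed.

Lemma vsum_vcv (g : nat -> nat -> X) (lv : nat -> X) N :
  (forall i, vcv (g i) (lv i)) -> vcv (fun K => vsum (fun i => g i K) N) (vsum lv N).
Proof. intro H. induction N; simpl. apply H. apply vcv_add; auto. Qed.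

Lemma vsum_diff_norm f n d :
  vnorm (vsub (vsum f (n + d)) (vsum f n)) <=
  sum_f_R0 (fun k => vnorm (f k)) (n + d) - sum_f_R0 (fun k => vnorm (f k)) n.
Proof. induction d. rewrite Nat.add_0_r, vsub_self, vnorm_zero; lra.
 rewrite Nat.add_succ_r. simpl.
 replace (vsub (vadd (vsum f (n + d)) (f (S (n + d)))) (vsum f n))
   with (vadd (vsub (vsum f (n + d)) (vsum f n)) (f (S (n + d)))).
 eapply Rle_trans; [apply vnorm_triangle|]. lra.
 unfold vsub. rewrite <- !vadd_assoc. f_equal. apply vadd_comm. Qed.

Lemma abs_conv f B : (forall n, sum_f_R0 (fun k => vnorm (f k)) n <= B) ->
  exists l, vser f l /\ vnorm l <= B.
Proof. intro HB.
 set (P := fun n => sum_f_R0 (fun k => vnorm (f k)) n).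
 assert (Hg : Un_growing P). { intro n; unfold P; simpl. pose proof (vnorm_nonneg (f (S n))); lra. }
 destruct (growing_cv P Hg) as [a Ha]. { exists B; intros x [n ->]; apply HB. }
 pose proof (CV_Cauchy P (exist _ a Ha)) as HC.
 assert (vCauchy (vsum f)).
 { intros e He. destruct (HC e He) as [N HN]. exists N. intros m n Hm Hn.
   assert (forall m n, (n <= m)%nat -> (N <= n)%nat -> vnorm (vsub (vsum f m) (vsum f n)) < e).
   { intros m' n' Hmn Hn'. replace m' with (n' + (m' - n'))%nat by lia.
     eapply Rle_lt_trans; [apply vsum_diff_norm|]. specialize (HN (n' + (m' - n'))%nat n' ltac:(lia) Hn').
     unfold R_dist in HN. fold (P (n' + (m' - n'))%nat) (P n'). pose proof (Rle_abs (P (n' + (m' - n'))%nat - P n')). lra. }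
   destruct (Compare_dec.le_lt_dec n m). apply H; auto. rewrite vnorm_sub_sym; apply H; auto; lia. }
 destruct (vCauchy_cv _ H) as [l Hl]. exists l; split; auto.
 apply (vcv_norm_le _ _ _ Hl). intro n. eapply Rle_trans; [apply vsum_norm|apply HB]. Qed.

Lemma vser_unique f l1 l2 : vser f l1 -> vser f l2 -> l1 = l2.
Proof. apply vcv_unique. Qed.

Lemma vser_add f g l m : vser f l -> vser g m -> vser (fun k => vadd (f k) (g k)) (vadd l m).
Proof. intros H1 H2. unfold vser. eapply vcv_ext. intro n; symmetry; apply vsum_add. apply vcv_add; auto. Qed.

Lemma vser_scal a f l : vser f l -> vser (fun k => vscal a (f k)) (vscal a l).
Proof. intros H1. unfold vser. eapply vcv_ext. intro n; apply vsum_scal. apply vcv_scal; auto. Qed.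

Lemma vser_sub f g l m : vser f l -> vser g m -> vser (fun k => vsub (f k) (g k)) (vsub l m).
Proof. intros H1 H2. unfold vser. eapply vcv_ext. intro n; symmetry; apply vsum_sub. apply vcv_sub; auto. Qed.

Lemma vser_shift f l : vser f l -> vser (fun k => f (S k)) (vsub l (f O)).
Proof. intro H. unfold vser. apply (vcv_ext (fun n => vsub (vsum f (S n)) (f O))).
 intro n. rewrite vsum_S, vadd_comm. apply vadd_sub_r.
 apply vcv_sub. apply vcv_shift; auto. apply vcv_const. Qed.

Lemma vser_unshift f l : vser (fun k => f (S k)) l -> vser f (vadd (f O) l).
Proof. intro H. unfold vser. apply vcv_unshift.
 apply (vcv_ext (fun n => vadd (f O) (vsum (fun k => f (S k)) n))).
 intro n; symmetry; apply vsum_S. apply vcv_add; auto. apply vcv_const. Qed.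

Lemma vser_zero_prefix f l m : (forall k, (k < m)%nat -> f k = vzero) ->
  vser (fun k => f (k + m)%nat) l -> vser f l.
Proof. revert f; induction m; intros f Hz H.
 - eapply vcv_ext; [|exact H]. intro n; apply vsum_ext; intros; rewrite Nat.add_0_r; auto.
 - assert (vser (fun k => f (S k)) l).
   { apply (IHm (fun k => f (S k))). intros; apply Hz; lia.
     eapply vcv_ext; [|exact H]. intro n; apply vsum_ext; intros; f_equal; lia. }
   pose proof (vser_unshift _ _ H0). rewrite Hz in H1 by lia. rewrite vadd_0l in H1; auto. Qed.

Lemma vser_zero : vser (fun _ => @vzero X) vzero.
Proof. unfold vser. eapply vcv_ext. intro n; symmetry; apply vsum_const0. apply vcv_const. Qed.

End Ser.

Section GenSum.
Variable T : Type.
Variable add : T -> T -> T.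
Variable zero : T.
Hypothesis add_assoc : forall x y z, add x (add y z) = add (add x y) z.
Hypothesis add_comm : forall x y, add x y = add y x.
Hypothesis add_0 : forall x, add x zero = x.

Fixpoint gs (f : nat -> T) (n : nat) : T :=
  match n with O => f O | S k => add (gs f k) (f (S k)) end.

Lemma gs_ext f g n : (forall k, (k <= n)%nat -> f k = g k) -> gs f n = gs g n.
Proof. induction n; simpl; intros H. apply H; lia. rewrite IHn, H; auto. Qed.

Lemma gs_add f g n : gs (fun k => add (f k) (g k)) n = add (gs f n) (gs g n).
Proof. induction n; simpl; auto. rewrite IHn. rewrite <- !add_assoc. f_equal.
 rewrite !add_assoc. f_equal. apply add_comm. Qed.

Lemma gs_zero f n : (forall k, (k <= n)%nat -> f k = zero) -> gs f n = zero.
Proof. induction n; simpl; intros H. apply H; lia. rewrite IHn. rewrite H by lia. apply add_0. intros; apply H; lia. Qed.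

Lemma gs_trunc f N M : (N <= M)%nat -> (forall k, (N < k <= M)%nat -> f k = zero) -> gs f M = gs f N.
Proof. intros HNM; induction HNM; intros Hz; auto. simpl. rewrite IHHNM. rewrite Hz by lia. apply add_0.
 intros; apply Hz; lia. Qed.

Lemma gs_swap (h : nat -> nat -> T) n m :
  gs (fun i => gs (fun j => h i j) m) n = gs (fun j => gs (fun i => h i j) n) m.
Proof. induction n; simpl. auto. rewrite IHn, <- gs_add. auto. Qed.

Lemma gs_mask f N K : (N <= K)%nat ->
  gs f K = add (gs f N) (gs (fun j => if Nat.leb j N then zero else f j) K).
Proof. intro H.
 transitivity (gs (fun j => add (if Nat.leb j N then f j else zero) (if Nat.leb j N then zero else f j)) K).
 apply gs_ext; intros; destruct (Nat.leb k N); rewrite ?add_0; auto. rewrite add_comm, add_0; auto.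
 rewrite gs_add. f_equal. rewrite (gs_trunc _ N K H). apply gs_ext; intros.
 rewrite (proj2 (Nat.leb_le k N)); auto.
 intros k Hk. rewrite (proj2 (Nat.leb_gt k N)) by lia; auto. Qed.

Lemma gs_mask2 (f : nat -> nat -> T) N M : (N <= M)%nat ->
  gs (fun i => gs (fun j => f i j) M) M =
  add (gs (fun i => gs (fun j => f i j) N) N)
   (add (gs (fun i => if Nat.leb i N then zero else gs (fun j => f i j) N) M)
        (gs (fun i => gs (fun j => if Nat.leb j N then zero else f i j) M) M)).
Proof. intro H.
 transitivity (gs (fun i => add (gs (fun j => f i j) N) (gs (fun j => if Nat.leb j N then zero else f i j) M)) M).
 apply gs_ext; intros; apply gs_mask; auto.
 rewrite gs_add, add_assoc. f_equal. apply gs_mask; auto. Qed.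

End GenSum.

Lemma sum_gs (f : nat -> R) n : sum_f_R0 f n = gs R Rplus f n.
Proof. induction n; simpl; auto. Qed.
Lemma vsum_gs {X : CBanach} (f : nat -> X) n : vsum f n = gs X vadd f n.
Proof. induction n; simpl; auto. rewrite IHn; auto. Qed.

Lemma Rgs_ext f g n : (forall k, (k <= n)%nat -> f k = g k) -> gs R Rplus f n = gs R Rplus g n.
Proof. apply gs_ext. Qed.

Lemma Rgs_le f g n : (forall k, (k <= n)%nat -> f k <= g k) -> gs R Rplus f n <= gs R Rplus g n.
Proof. intros. rewrite <- !sum_gs. apply sum_Rle; auto. Qed.

Lemma Rgs_nonneg f n : (forall k, 0 <= f k) -> 0 <= gs R Rplus f n.
Proof. intros. rewrite <- !sum_gs. apply cond_pos_sum; auto. Qed.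

Lemma Rgs_mono f n m : (forall k, 0 <= f k) -> (n <= m)%nat -> gs R Rplus f n <= gs R Rplus f m.
Proof. intros. rewrite <- !sum_gs. apply sum_mono_n; auto. Qed.

Lemma Rgs_mask2 (f : nat -> nat -> R) N M : (N <= M)%nat ->
  gs R Rplus (fun i => gs R Rplus (fun j => f i j) M) M =
  gs R Rplus (fun i => gs R Rplus (fun j => f i j) N) N +
   (gs R Rplus (fun i => if Nat.leb i N then 0 else gs R Rplus (fun j => f i j) N) M +
        gs R Rplus (fun i => gs R Rplus (fun j => if Nat.leb j N then 0 else f i j) M) M).
Proof. apply gs_mask2; intros; ring. Qed.

Lemma Rgs_mask f N K : (N <= K)%nat ->
  gs R Rplus f K = gs R Rplus f N + gs R Rplus (fun j => if Nat.leb j N then 0 else f j) K.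
Proof. apply gs_mask; intros; ring. Qed.

Section Fub.
Context {X : CBanach}.

Lemma Vgs_norm (f : nat -> X) n : vnorm (gs X vadd f n) <= gs R Rplus (fun k => vnorm (f k)) n.
Proof. rewrite <- vsum_gs, <- sum_gs. apply vsum_norm. Qed.

Lemma Vgs_mask2 (f : nat -> nat -> X) N M : (N <= M)%nat ->
  gs X vadd (fun i => gs X vadd (fun j => f i j) M) M =
  vadd (gs X vadd (fun i => gs X vadd (fun j => f i j) N) N)
   (vadd (gs X vadd (fun i => if Nat.leb i N then vzero else gs X vadd (fun j => f i j) N) M)
        (gs X vadd (fun i => gs X vadd (fun j => if Nat.leb j N then vzero else f i j) M) M)).
Proof. apply gs_mask2. apply vadd_assoc. apply vadd_comm. apply vadd_0. Qed.

Lemma Vgs_mask (f : nat -> X) N K : (N <= K)%nat ->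
  gs X vadd f K = vadd (gs X vadd f N) (gs X vadd (fun j => if Nat.leb j N then vzero else f j) K).
Proof. apply gs_mask. apply vadd_assoc. apply vadd_comm. apply vadd_0. Qed.

Lemma Vgs_swap (h : nat -> nat -> X) n m :
  gs X vadd (fun i => gs X vadd (fun j => h i j) m) n = gs X vadd (fun j => gs X vadd (fun i => h i j) n) m.
Proof. apply gs_swap. apply vadd_assoc. apply vadd_comm. Qed.

Variable f : nat -> nat -> X.
Definition Aabs N := gs R Rplus (fun i => gs R Rplus (fun j => vnorm (f i j)) N) N.
Definition Qs N := gs X vadd (fun i => gs X vadd (fun j => f i j) N) N.

Lemma Aabs_diff N M : (N <= M)%nat ->
  vnorm (vsub (Qs M) (Qs N)) <= Aabs M - Aabs N.
Proof. intro H. unfold Qs, Aabs. rewrite (Vgs_mask2 f N M H), (Rgs_mask2 _ N M H).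
 rewrite vadd_comm, vadd_sub_r.
 eapply Rle_trans; [apply vnorm_triangle|].
 match goal with |- ?a + ?b <= ?c + (?d + ?e) - ?c => cut (a <= d /\ b <= e); [lra|] end. split.
 - eapply Rle_trans; [apply Vgs_norm|]. apply Rgs_le; intros. destruct (Nat.leb k N).
   rewrite vnorm_zero; lra. apply Vgs_norm.
 - eapply Rle_trans; [apply Vgs_norm|]. apply Rgs_le; intros.
   eapply Rle_trans; [apply Vgs_norm|]. apply Rgs_le; intros. destruct (Nat.leb k0 N).
   rewrite vnorm_zero; lra. lra. Qed.

Lemma Aabs_mono N M : (N <= M)%nat -> Aabs N <= Aabs M.
Proof. intro H. unfold Aabs. rewrite (Rgs_mask2 _ N M H).
 assert (0 <= gs R Rplus (fun i => if Nat.leb i N then 0 else gs R Rplus (fun j => vnorm (f i j)) N) M).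
 { apply Rgs_nonneg; intros; destruct (Nat.leb k N). lra. apply Rgs_nonneg; intros; apply vnorm_nonneg. }
 assert (0 <= gs R Rplus (fun i => gs R Rplus (fun j => if Nat.leb j N then 0 else vnorm (f i j)) M) M).
 { apply Rgs_nonneg; intros. apply Rgs_nonneg; intros; destruct (Nat.leb k0 N). lra. apply vnorm_nonneg. }
 lra. Qed.

Lemma rows_diff (r : nat -> X) N K : (forall i, vser (f i) (r i)) -> (N <= K)%nat ->
  vnorm (gs X vadd (fun i => vsub (gs X vadd (fun j => f i j) K) (gs X vadd (fun j => f i j) N)) N)
  <= Aabs K - Aabs N.
Proof. intros Hr H.
 replace (gs X vadd (fun i => vsub (gs X vadd (fun j => f i j) K) (gs X vadd (fun j => f i j) N)) N)
  with (gs X vadd (fun i => gs X vadd (fun j => if Nat.leb j N then vzero else f i j) K) N).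
 2: { apply gs_ext; intros. rewrite (Vgs_mask (fun j => f k j) N K H). rewrite vadd_comm, vadd_sub_r; auto. }
 unfold Aabs. rewrite (Rgs_mask2 _ N K H).
 eapply Rle_trans; [apply Vgs_norm|].
 assert (0 <= gs R Rplus (fun i => if Nat.leb i N then 0 else gs R Rplus (fun j => vnorm (f i j)) N) K).
 { apply Rgs_nonneg; intros; destruct (Nat.leb k N). lra. apply Rgs_nonneg; intros; apply vnorm_nonneg. }
 match goal with |- ?z <= ?c + (?d + ?e) - ?c => cut (z <= e); [lra|] end.
 eapply Rle_trans with (gs R Rplus (fun i => gs R Rplus (fun j => if Nat.leb j N then 0 else vnorm (f i j)) K) N).
 - apply Rgs_le; intros. eapply Rle_trans; [apply Vgs_norm|]. apply Rgs_le; intros.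
   destruct (Nat.leb k0 N). rewrite vnorm_zero; lra. lra.
 - apply Rgs_mono; auto. intro k. apply Rgs_nonneg; intros; destruct (Nat.leb k0 N). lra. apply vnorm_nonneg. Qed.

Hypothesis Hb : exists B, forall N, Aabs N <= B.

Lemma Aabs_cauchy : exists a, Un_cv Aabs a /\ forall N, Aabs N <= a.
Proof. destruct Hb as [B HB].
 assert (Hg : Un_growing Aabs). { intro n; apply Aabs_mono; lia. }
 destruct (growing_cv Aabs Hg) as [a Ha]. { exists B; intros x [n ->]; apply HB. }
 exists a; split; auto. intro; apply growing_ineq; auto. Qed.

Lemma fubini_rows (r : nat -> X) : (forall i, vser (f i) (r i)) ->
  exists L, vcv Qs L /\ vser r L.
Proof. intro Hr. destruct Aabs_cauchy as [a [Ha Hle]].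
 assert (HC : vCauchy Qs).
 { intros e He. destruct (Ha e He) as [N HN]. exists N. intros m n Hm Hn.
   assert (forall m n, (n <= m)%nat -> (N <= n)%nat -> vnorm (vsub (Qs m) (Qs n)) < e).
   { intros m' n' Hmn Hn'. eapply Rle_lt_trans; [apply Aabs_diff; auto|].
     specialize (HN n' Hn'). unfold R_dist in HN. pose proof (Hle m'). pose proof (Rabs_def2 _ _ HN). lra. }
   destruct (Compare_dec.le_lt_dec n m). apply H; auto. rewrite vnorm_sub_sym; apply H; auto; lia. }
 destruct (vCauchy_cv _ HC) as [L HL]. exists L; split; auto.
 assert (Hd : forall N, vnorm (vsub (vsum r N) (Qs N)) <= a - Aabs N).
 { intro N. rewrite vsum_gs. unfold Qs.
   apply (vcv_norm_le (fun K => gs X vadd (fun i => vsub (gs X vadd (fun j => f i j) (K + N)) (gs X vadd (fun j => f i j) N)) N)).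
   - apply (vcv_ext (fun K => vsum (fun i => vsub (gs X vadd (fun j => f i j) (K + N)) (gs X vadd (fun j => f i j) N)) N)).
     { intro K; apply vsum_gs. }
     replace (vsub (gs X vadd r N) (gs X vadd (fun i => gs X vadd (fun j => f i j) N) N))
       with (vsum (fun i => vsub (r i) (gs X vadd (fun j => f i j) N)) N) by (rewrite vsum_sub, !vsum_gs; auto).
     apply vsum_vcv. intro i. apply vcv_sub; [|apply vcv_const].
     intros e He. destruct (Hr i e He) as [M HM]. exists M. intros n Hn. rewrite <- vsum_gs. apply HM; lia.
   - intro K. eapply Rle_trans; [apply (rows_diff r); auto; lia|]. pose proof (Hle (K + N)%nat). lra. }
 intros e He. destruct (Ha (e/2)) as [N1 HN1]; [lra|]. destruct (HL (e/2)) as [N2 HN2]; [lra|].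
 exists (N1 + N2)%nat. intros n Hn.
 eapply Rle_lt_trans; [apply (vnorm_sub_tri _ (Qs n))|].
 specialize (HN1 n ltac:(lia)); specialize (HN2 n ltac:(lia)). specialize (Hd n).
 unfold R_dist in HN1. pose proof (Rabs_def2 _ _ HN1). lra. Qed.

End Fub.

Lemma fubini {X : CBanach} (f : nat -> nat -> X) (B : R) (r c : nat -> X) :
  (forall N, Aabs f N <= B) -> (forall i, vser (f i) (r i)) -> (forall j, vser (fun i => f i j) (c j)) ->
  exists L, vser r L /\ vser c L.
Proof. intros HB Hr Hc.
 destruct (fubini_rows f (ex_intro _ B HB) r Hr) as [L1 [HQ1 H1]].
 destruct (fubini_rows (fun i j => f j i)) with (r := c) as [L2 [HQ2 H2]].
 { exists B. intro N. unfold Aabs. rewrite (gs_swap R Rplus); [apply HB | intros; ring | intros; ring]. }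
 { intro j; apply Hc. }
 assert (L1 = L2). { apply (vcv_unique (Qs f)); auto. eapply vcv_ext; [|exact HQ2].
   intro N. unfold Qs. apply Vgs_swap. }
 subst; eauto. Qed.

Lemma expsum_le r n : 0 <= r -> sum_f_R0 (fun k => r ^ k / INR (fact k)) n <= exp r.
Proof. intro Hr. unfold exp. destruct (exist_exp r) as [l Hl]. simpl.
 assert (Un_cv (fun n => sum_f_R0 (fun i => / INR (fact i) * r ^ i) n) l) by exact Hl.
 replace (sum_f_R0 (fun k => r ^ k / INR (fact k)) n) with (sum_f_R0 (fun i => / INR (fact i) * r ^ i) n)
  by (apply sum_eq; intros; unfold Rdiv; ring).
 apply growing_ineq; auto. intro m.
 change (sum_f_R0 (fun i => / INR (fact i) * r ^ i) (S m)) with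
   (sum_f_R0 (fun i => / INR (fact i) * r ^ i) m + / INR (fact (S m)) * r ^ (S m)).
 assert (0 <= / INR (fact (S m)) * r ^ (S m)).
 { apply Rmult_le_pos. left; apply Rinv_0_lt_compat, INR_fact_lt_0. apply pow_le; auto. }
 lra. Qed.

Lemma exp_series_cv r : Un_cv (fun n => sum_f_R0 (fun k => r ^ k / INR (fact k)) n) (exp r).
Proof. unfold exp. destruct (exist_exp r) as [l Hl]. simpl.
 intros e He. destruct (Hl e He) as [N HN]. exists N. intros n Hn.
 replace (sum_f_R0 (fun k => r ^ k / INR (fact k)) n) with (sum_f_R0 (fun i => / INR (fact i) * r ^ i) n)
  by (apply sum_eq; intros; unfold Rdiv; ring). apply HN; auto. Qed.

Section BL.
Context {X : CBanach}.
Implicit Types x y z l : X.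
Implicit Types u v f g : nat -> X.
Implicit Types B L : X -> X.

Definition BL B := is_bounded_linear B.

Lemma bl_add B x y : BL B -> B (vadd x y) = vadd (B x) (B y).
Proof. intros [H _]; auto. Qed.
Lemma bl_scal B a x : BL B -> B (vscal a x) = vscal a (B x).
Proof. intros [_ [H _]]; auto. Qed.
Lemma bl_bound B : BL B -> exists M, 0 <= M /\ forall x, vnorm (B x) <= M * vnorm x.
Proof. intros [_ [_ [M HM]]]. exists (Rabs M). split. apply Rabs_pos. intro x.
 eapply Rle_trans; [apply HM|]. apply Rmult_le_compat_r. apply vnorm_nonneg. apply Rle_abs. Qed.
Lemma bl_zero B : BL B -> B vzero = vzero.
Proof. intro H. rewrite <- (vscal_C0 (@vzero X)) at 1. rewrite bl_scal, vscal_C0; auto. Qed.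
Lemma bl_opp B x : BL B -> B (vopp x) = vopp (B x).
Proof. intro H. rewrite !vopp_scal, bl_scal; auto. Qed.
Lemma bl_sub B x y : BL B -> B (vsub x y) = vsub (B x) (B y).
Proof. intro H. unfold vsub. rewrite bl_add, bl_opp; auto. Qed.
Lemma bl_vcv B u l : BL B -> vcv u l -> vcv (fun n => B (u n)) (B l).
Proof. intros HB H. destruct (bl_bound B HB) as [M [HM0 HM]].
 intros e He. destruct (H (e / (M + 1))) as [N HN]. apply Rdiv_lt_0_compat; lra.
 exists N; intros n Hn. rewrite <- bl_sub by auto. eapply Rle_lt_trans; [apply HM|].
 specialize (HN n Hn). pose proof (vnorm_nonneg (vsub (u n) l)).
 apply Rle_lt_trans with ((M+1) * vnorm (vsub (u n) l)). nra.
 apply Rmult_lt_reg_l with (/ (M + 1)). apply Rinv_0_lt_compat; lra.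
 rewrite <- Rmult_assoc, Rinv_l by lra. unfold Rdiv in HN. lra. Qed.
Lemma bl_vsum B f n : BL B -> B (vsum f n) = vsum (fun k => B (f k)) n.
Proof. intro H. apply vsum_lin. intros; apply bl_add; auto. Qed.
Lemma bl_vser B f l : BL B -> vser f l -> vser (fun k => B (f k)) (B l).
Proof. intros HB H. unfold vser. apply (vcv_ext (fun n => B (vsum f n))). intro n; apply bl_vsum; auto. apply bl_vcv; auto. Qed.

Lemma bl_id : BL (fun y => y).
Proof. split; [|split]; auto. exists 1; intros; lra. Qed.
Lemma bl_comp B L : BL B -> BL L -> BL (fun y => B (L y)).
Proof. intros HB HL. destruct (bl_bound B HB) as [M [HM0 HM]]. destruct (bl_bound L HL) as [K [HK0 HK]].
 split; [|split]. intros; rewrite !bl_add; auto. intros; rewrite !bl_scal; auto.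
 exists (M * K). intro x. eapply Rle_trans; [apply HM|]. rewrite Rmult_assoc. apply Rmult_le_compat_l; auto. Qed.
Lemma bl_plus B L : BL B -> BL L -> BL (fun y => vadd (B y) (L y)).
Proof. intros HB HL. destruct (bl_bound B HB) as [M [HM0 HM]]. destruct (bl_bound L HL) as [K [HK0 HK]].
 split; [|split].
 - intros; rewrite (bl_add B), (bl_add L) by auto. rewrite <- !vadd_assoc. f_equal. rewrite !vadd_assoc. f_equal. apply vadd_comm.
 - intros; rewrite (bl_scal B), (bl_scal L), vscal_distr_v; auto.
 - exists (M + K). intro x. eapply Rle_trans; [apply vnorm_triangle|]. pose proof (HM x); pose proof (HK x); lra. Qed.
Lemma bl_smul B a : BL B -> BL (fun y => vscal a (B y)).
Proof. intros HB. destruct (bl_bound B HB) as [M [HM0 HM]]. split; [|split].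
 - intros; rewrite bl_add, vscal_distr_v; auto.
 - intros; rewrite bl_scal, !vscal_assoc, Cmul_comm; auto.
 - exists (Cmod a * M). intro x. rewrite vnorm_scal, Rmult_assoc. apply Rmult_le_compat_l; auto. apply Cmod_nonneg. Qed.
Lemma bl_cst a : BL (fun y : X => vscal a y).
Proof. apply (bl_smul (fun y => y)). apply bl_id. Qed.

Lemma iter_S B k y : Nat.iter (S k) B y = B (Nat.iter k B y). Proof. reflexivity. Qed.
Lemma iter_add B i j y : Nat.iter (i + j) B y = Nat.iter i B (Nat.iter j B y).
Proof. induction i; simpl; auto. rewrite IHi; auto. Qed.
Lemma iter_S' B k y : Nat.iter (S k) B y = Nat.iter k B (B y).
Proof. replace (S k) with (k + 1)%nat by lia. rewrite iter_add; auto. Qed.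
Lemma iter_comm B L k y : (forall y, L (B y) = B (L y)) -> L (Nat.iter k B y) = Nat.iter k B (L y).
Proof. intro H. induction k; simpl; auto. rewrite H, IHk; auto. Qed.
Lemma iter_ext B L k y : (forall y, B y = L y) -> Nat.iter k B y = Nat.iter k L y.
Proof. intro H. induction k; simpl; auto. rewrite H, IHk; auto. Qed.
Lemma iter_bl B k : BL B -> BL (fun y => Nat.iter k B y).
Proof. intro H. induction k; simpl. apply bl_id. apply (bl_comp B (fun y => Nat.iter k B y)); auto. Qed.
Lemma iter_bound B M k y : 0 <= M -> (forall x, vnorm (B x) <= M * vnorm x) ->
  vnorm (Nat.iter k B y) <= M ^ k * vnorm y.
Proof. intros HM H. induction k; simpl. lra. eapply Rle_trans; [apply H|]. rewrite Rmult_assoc. apply Rmult_le_compat_l; auto. Qed.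

Definition pterm (c : nat -> R) B y := fun k => vscal (RtoC (c k)) (Nat.iter k B y).
Definition pser (c : nat -> R) B y : X := vlim (vsum (pterm c B y)).

Definition pok (c : nat -> R) B := exists M K, 0 <= M /\ (forall x, vnorm (B x) <= M * vnorm x) /\
   forall n, sum_f_R0 (fun k => Rabs (c k) * M ^ k) n <= K.

Lemma pser_spec c B y : pok c B -> vser (pterm c B y) (pser c B y) /\
  exists K, vnorm (pser c B y) <= K * vnorm y /\ forall y', vnorm (pser c B y') <= K * vnorm y'.
Proof. intros [M [K [HM0 [HM HK]]]].
 assert (Hgen : forall y', exists l, vser (pterm c B y') l /\ vnorm l <= K * vnorm y').
 { intro y'. apply abs_conv. intro n.
   apply Rle_trans with (sum_f_R0 (fun k => Rabs (c k) * M ^ k) n * vnorm y').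
   rewrite Rmult_comm, scal_sum. apply sum_Rle. intros k _. unfold pterm. rewrite vscal_real_norm.
   rewrite Rmult_assoc. apply Rmult_le_compat_l. apply Rabs_pos. apply iter_bound; auto.
   apply Rmult_le_compat_r; auto. apply vnorm_nonneg. }
 assert (Hs : forall y', vser (pterm c B y') (pser c B y')).
 { intro y'. destruct (Hgen y') as [l [Hl _]]. unfold pser. apply vlim_spec. eauto. }
 split; auto. exists K. 
 assert (forall y', vnorm (pser c B y') <= K * vnorm y').
 { intro y'. destruct (Hgen y') as [l [Hl Hn]]. rewrite (vser_unique _ _ _ (Hs y') Hl); auto. }
 auto. Qed.

Lemma pser_eq c B y l : pok c B -> vser (pterm c B y) l -> pser c B y = l.
Proof. intros H Hl. apply (vser_unique (pterm c B y)); auto. apply pser_spec; auto. Qed.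

Lemma pser_bl c B : BL B -> pok c B -> BL (pser c B).
Proof. intros HB Hp. split; [|split].
 - intros x y. apply pser_eq; auto.
   apply (vcv_ext (fun n => vadd (vsum (pterm c B x) n) (vsum (pterm c B y) n))).
   { intro n. rewrite <- vsum_add. apply vsum_ext. intros k _. unfold pterm.
     rewrite <- vscal_distr_v. f_equal. symmetry. apply (bl_add _ _ _ (iter_bl B k HB)). }
   apply vcv_add; apply pser_spec; auto.
 - intros a x. apply pser_eq; auto.
   apply (vcv_ext (fun n => vscal a (vsum (pterm c B x) n))).
   { intro n. rewrite vsum_scal. apply vsum_ext. intros k _. unfold pterm.
     rewrite (bl_scal _ _ _ (iter_bl B k HB)), !vscal_assoc, Cmul_comm; auto. }
   apply vcv_scal; apply pser_spec; auto.
 - destruct (pser_spec c B vzero Hp) as [_ [K [_ HK]]]. exists K; auto. Qed.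

Lemma pser_comm c B L y : BL B -> pok c B -> BL L -> (forall y, L (B y) = B (L y)) ->
  L (pser c B y) = pser c B (L y).
Proof. intros HB Hp HL Hc. symmetry. apply pser_eq; auto.
 apply (vcv_ext (fun n => L (vsum (pterm c B y) n))).
 { intro n. rewrite bl_vsum by auto. apply vsum_ext; intros k _. unfold pterm.
   rewrite bl_scal, iter_comm; auto. }
 apply bl_vcv; auto. apply pser_spec; auto. Qed.

Lemma pser_applyB c B y : BL B -> pok c B ->
  vser (fun k => vscal (RtoC (c k)) (Nat.iter (S k) B y)) (B (pser c B y)).
Proof. intros HB Hp. eapply vcv_ext; [|apply (bl_vser B _ _ HB (proj1 (pser_spec c B y Hp)))].
 intro n. apply vsum_ext; intros k _. unfold pterm. rewrite bl_scal; auto. Qed.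

Definition ecoef (t : R) := fun k => t ^ k / INR (fact k).
Definition E B (t : R) y := pser (ecoef t) B y.

Lemma ecoef_abs t k : Rabs (ecoef t k) = Rabs t ^ k / INR (fact k).
Proof. unfold ecoef, Rdiv. rewrite Rabs_mult, RPow_abs, Rabs_inv. f_equal. f_equal.
 apply Rabs_pos_eq. apply pos_INR. Qed.

Lemma pok_exp B t : BL B -> pok (ecoef t) B.
Proof. intro HB. destruct (bl_bound B HB) as [M [HM0 HM]]. exists M, (exp (Rabs t * M)).
 split; auto; split; auto. intro n. eapply Rle_trans; [|apply expsum_le].
 apply Req_le. apply sum_eq. intros. rewrite ecoef_abs, Rpow_mult_distr. unfold Rdiv; ring.
 apply Rmult_le_pos; auto. apply Rabs_pos. Qed.

Lemma E_spec B t y : BL B -> exp_op_at B t y (E B t y).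
Proof. intro HB. unfold exp_op_at. apply (pser_spec _ _ _ (pok_exp B t HB)). Qed.

Lemma E_bl B t : BL B -> BL (E B t).
Proof. intro HB. apply pser_bl; auto. apply pok_exp; auto. Qed.

End BL.

Lemma ecoef_pos t k : 0 <= t -> 0 <= ecoef t k.
Proof. intro. unfold ecoef. apply Rmult_le_pos. apply pow_le; auto. left; apply Rinv_0_lt_compat, INR_fact_lt_0. Qed.

Lemma ecoef_S t i : INR (S i) * ecoef t (S i) = t * ecoef t i.
Proof. unfold ecoef. rewrite fact_simpl, mult_INR. simpl pow.
 pose proof (INR_fact_neq_0 i). assert (INR (S i) <> 0) by (apply not_0_INR; lia). field; auto. Qed.

Lemma ecoef_0 t : ecoef t 0 = 1.
Proof. unfold ecoef; simpl. field. Qed.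

Lemma sum_reindex (phi : nat -> R) i N : (forall k, 0 <= phi k) ->
  sum_f_R0 (fun mm => if Nat.leb i mm then phi (mm - i)%nat else 0) N =
  if Nat.leb i N then sum_f_R0 phi (N - i) else 0.
Proof. intro Hp. induction N.
 - simpl. destruct i; simpl; auto.
 - change (sum_f_R0 (fun mm => if Nat.leb i mm then phi (mm - i)%nat else 0) (S N)) with
     (sum_f_R0 (fun mm => if Nat.leb i mm then phi (mm - i)%nat else 0) N + (if Nat.leb i (S N) then phi (S N - i)%nat else 0)).
   rewrite IHN. destruct (Nat.leb i N) eqn:E1.
   + apply Nat.leb_le in E1. rewrite (proj2 (Nat.leb_le i (S N))) by lia.
     replace (S N - i)%nat with (S (N - i)) by lia. reflexivity.
   + apply Nat.leb_gt in E1. destruct (Nat.leb i (S N)) eqn:E2.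
     * apply Nat.leb_le in E2. replace (S N - i)%nat with O by lia. simpl. ring.
     * ring. Qed.

Lemma sum_reindex_le (phi : nat -> R) i N : (forall k, 0 <= phi k) ->
  sum_f_R0 (fun mm => if Nat.leb i mm then phi (mm - i)%nat else 0) N <= sum_f_R0 phi N.
Proof. intro Hp. rewrite sum_reindex; auto. destruct (Nat.leb i N).
 apply sum_mono_n; auto; lia. apply cond_pos_sum; auto. Qed.

Lemma vser_finite {X : CBanach} (f : nat -> X) m : (forall k, (m < k)%nat -> f k = vzero) -> vser f (vsum f m).
Proof. intro H. unfold vser. apply (vcv_ext_ev (fun _ => vsum f m) _ _ m).
 intros n Hn. symmetry. rewrite !vsum_gs. apply (gs_trunc X vadd vzero); auto. apply vadd_0.
 intros; apply H; lia. apply vcv_const. Qed.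

Lemma sum_mult_r (a : nat -> R) K N : sum_f_R0 (fun i => a i * K) N = sum_f_R0 a N * K.
Proof. rewrite Rmult_comm, scal_sum. auto. Qed.

Section Prod.
Context {X : CBanach}.
Variables B1 B2 : X -> X.
Hypothesis H1 : BL B1.
Hypothesis H2 : BL B2.
Hypothesis Hc : forall y, B1 (B2 y) = B2 (B1 y).

Definition S12 (z : X) := vadd (B1 z) (B2 z).
Lemma S12_bl : BL S12. Proof. apply bl_plus; auto. Qed.

Variable y : X.
Definition W i j := Nat.iter i B1 (Nat.iter j B2 y).
Definition acoef i j := ecoef 1 i * ecoef 1 j.
Definition Dg m := vsum (fun i => vscal (RtoC (acoef i (m - i))) (W i (m - i))) m.

Lemma B2_W i j : B2 (W i j) = W i (S j).
Proof. unfold W. rewrite (iter_comm B1 B2). reflexivity. intros; symmetry; apply Hc. Qed.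

Lemma Dg_step m : vscal (RtoC (INR (S m))) (Dg (S m)) = S12 (Dg m).
Proof. unfold Dg. rewrite vsum_scal. unfold S12.
 rewrite (bl_vsum B1), (bl_vsum B2) by auto. rewrite <- vsum_add.
 transitivity (vadd (vsum (fun i => vscal (RtoC (INR i * acoef i (S m - i))) (W i (S m - i))) (S m))
                    (vsum (fun i => vscal (RtoC (INR (S m - i) * acoef i (S m - i))) (W i (S m - i))) (S m))).
 { rewrite <- vsum_add. apply vsum_ext. intros k Hk. rewrite vscal_assoc, <- vscal_distr_c, <- !RtoC_mul, <- RtoC_add.
   f_equal. f_equal. rewrite <- Rmult_plus_distr_r, <- plus_INR. f_equal. f_equal. lia. }
 rewrite vsum_S. change (vsum ?f (S m)) with (vadd (vsum f m) (f (S m))).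
 cbv beta. rewrite Nat.sub_diag. change (INR 0) with 0. rewrite !Rmult_0_l, RtoC_0, !vscal_C0, vadd_0l, vadd_0.
 rewrite <- vsum_add. apply vsum_ext. intros i Hi. f_equal.
 - rewrite (bl_scal B1) by auto. replace (S m - S i)%nat with (m - i)%nat by lia.
   unfold acoef. rewrite <- Rmult_assoc, ecoef_S, Rmult_1_l. f_equal.
 - rewrite (bl_scal B2) by auto. rewrite B2_W. replace (S m - i)%nat with (S (m - i)) by lia.
   unfold acoef. rewrite Rmult_comm, Rmult_assoc, (Rmult_comm (ecoef 1 (S (m - i)))), ecoef_S, Rmult_1_l. auto. Qed.

Lemma Dg_eq m : Dg m = vscal (RtoC (ecoef 1 m)) (Nat.iter m S12 y).
Proof. induction m.
 - unfold Dg, acoef, W. simpl. rewrite ecoef_0, Rmult_1_l; auto.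
 - assert (Hn : INR (S m) <> 0) by (apply not_0_INR; lia).
   transitivity (vscal (RtoC (/ INR (S m))) (vscal (RtoC (INR (S m))) (Dg (S m)))).
   { rewrite vscal_assoc, <- RtoC_mul, Rinv_l, RtoC_1, vscal_1; auto. }
   rewrite Dg_step, IHm. rewrite (bl_scal S12) by apply S12_bl. rewrite vscal_assoc, <- RtoC_mul.
   f_equal. f_equal. pose proof (ecoef_S 1 m). apply (Rmult_eq_reg_l (INR (S m))); auto.
   rewrite H. field; auto. Qed.

Definition Fg i j := vscal (RtoC (ecoef 1 i)) (Nat.iter i B1 (vscal (RtoC (ecoef 1 j)) (Nat.iter j B2 y))).
Lemma Fg_eq i j : Fg i j = vscal (RtoC (acoef i j)) (W i j).
Proof. unfold Fg, acoef, W. rewrite (bl_scal (fun z => Nat.iter i B1 z)) by (apply iter_bl; auto).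
 rewrite vscal_assoc, RtoC_mul; auto. Qed.

Definition gg i mm := if Nat.leb i mm then Fg i (mm - i) else vzero.

Theorem exp_product : E S12 1 y = E B1 1 (E B2 1 y).
Proof.
 destruct (bl_bound B1 H1) as [M1 [HM1 HB1]]. destruct (bl_bound B2 H2) as [M2 [HM2 HB2]].
 set (row := fun i => vscal (RtoC (ecoef 1 i)) (Nat.iter i B1 (E B2 1 y))).
 set (col := fun mm => vscal (RtoC (ecoef 1 mm)) (Nat.iter mm S12 y)).
 assert (Hrow : forall i, vser (gg i) (row i)).
 { intro i. apply (vser_zero_prefix _ _ i).
   { intros k Hk. unfold gg. rewrite (proj2 (Nat.leb_gt i k)) by lia; auto. }
   apply (vcv_ext (vsum (Fg i))).
   { intro n. apply vsum_ext. intros k _. unfold gg. rewrite (proj2 (Nat.leb_le i (k + i))) by lia.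
     replace (k + i - i)%nat with k by lia; auto. }
   unfold row, Fg. apply (bl_vser (fun z => vscal (RtoC (ecoef 1 i)) (Nat.iter i B1 z))).
   apply bl_smul, iter_bl; auto. apply (pser_spec _ _ _ (pok_exp B2 1 H2)). }
 assert (Hcol : forall mm, vser (fun i => gg i mm) (col mm)).
 { intro mm. replace (col mm) with (vsum (fun i => gg i mm) mm).
   apply vser_finite. intros k Hk. unfold gg. rewrite (proj2 (Nat.leb_gt k mm)) by lia; auto.
   unfold col. rewrite <- Dg_eq. unfold Dg. apply vsum_ext. intros k Hk. unfold gg.
   rewrite (proj2 (Nat.leb_le k mm)) by lia. apply Fg_eq. }
 assert (HB : forall N, Aabs gg N <= exp M1 * exp M2 * vnorm y).
 { intro N. unfold Aabs. rewrite <- !sum_gs.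
   set (phi := fun i j => ecoef 1 i * M1 ^ i * (ecoef 1 j * M2 ^ j) * vnorm y).
   assert (Hphi : forall i j, 0 <= phi i j).
   { intros. unfold phi. pose proof (ecoef_pos 1 i ltac:(lra)); pose proof (ecoef_pos 1 j ltac:(lra)).
     pose proof (pow_le M1 i HM1); pose proof (pow_le M2 j HM2); pose proof (vnorm_nonneg y).
     apply Rmult_le_pos; auto. apply Rmult_le_pos; apply Rmult_le_pos; auto. }
   assert (HF : forall i j, vnorm (Fg i j) <= phi i j).
   { intros. unfold Fg, phi. rewrite vscal_real_norm, Rabs_pos_eq by (apply ecoef_pos; lra).
     rewrite !Rmult_assoc. apply Rmult_le_compat_l. apply ecoef_pos; lra.
     eapply Rle_trans; [apply (iter_bound B1 M1); auto|]. apply Rmult_le_compat_l; [apply pow_le; auto|].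
     rewrite vscal_real_norm, Rabs_pos_eq by (apply ecoef_pos; lra).
     apply Rmult_le_compat_l; [apply ecoef_pos; lra|]. apply iter_bound; auto. }
   apply Rle_trans with (sum_f_R0 (fun i => sum_f_R0 (fun j => phi i j) N) N).
   { apply sum_Rle. intros i _.
     apply Rle_trans with (sum_f_R0 (fun mm => if Nat.leb i mm then phi i (mm - i)%nat else 0) N).
     apply sum_Rle. intros mm _. unfold gg. destruct (Nat.leb i mm). apply HF. rewrite vnorm_zero; lra.
     apply sum_reindex_le. intro; apply Hphi. }
   unfold phi.
   apply Rle_trans with (sum_f_R0 (fun i => ecoef 1 i * M1 ^ i) N * sum_f_R0 (fun j => ecoef 1 j * M2 ^ j) N * vnorm y).
   { apply Req_le.
     transitivity (sum_f_R0 (fun i => ecoef 1 i * M1^i * (sum_f_R0 (fun j => ecoef 1 j * M2^j * vnorm y) N)) N).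
     apply sum_eq; intros. rewrite Rmult_comm, scal_sum. apply sum_eq; intros; ring.
     rewrite sum_mult_r, sum_mult_r. ring. }
   apply Rmult_le_compat_r. apply vnorm_nonneg.
   assert (forall M, 0 <= M -> sum_f_R0 (fun i => ecoef 1 i * M ^ i) N <= exp M).
   { intros M HM. eapply Rle_trans; [|apply (expsum_le M N HM)]. apply Req_le, sum_eq. intros; unfold ecoef.
     rewrite pow1. unfold Rdiv; ring. }
   apply Rmult_le_compat; auto. apply cond_pos_sum; intros. apply Rmult_le_pos. apply ecoef_pos; lra. apply pow_le; auto.
   apply cond_pos_sum; intros. apply Rmult_le_pos. apply ecoef_pos; lra. apply pow_le; auto. }
 destruct (fubini gg _ row col HB Hrow Hcol) as [L [HL1 HL2]].
 transitivity L.
 - apply pser_eq. apply pok_exp, S12_bl. exact HL2.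
 - symmetry. apply pser_eq. apply pok_exp; auto. exact HL1. Qed.

End Prod.

Lemma Cmod_le_sum a : Cmod a <= Rabs (fst a) + Rabs (snd a).
Proof. destruct a as [p q]. cbn [fst snd].
 assert (Cmod (0,q) = Rabs q). { unfold Cmod. simpl. rewrite <- sqrt_Rsqr_abs. f_equal. unfold Rsqr. ring. }
 assert (E0 : (p,q) = Cadd (RtoC p) (0,q)) by (unfold RtoC; cring). rewrite E0.
 eapply Rle_trans; [apply Cmod_add|]. rewrite Cmod_RtoC, H. lra. Qed.

Lemma C_complete : forall u : nat -> Complex,
    (forall eps, 0 < eps -> exists N, forall m n, (N <= m)%nat -> (N <= n)%nat ->
        Cmod (Cadd (u m) (Copp (u n))) < eps) ->
    exists l, forall eps, 0 < eps -> exists N, forall n, (N <= n)%nat ->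
        Cmod (Cadd (u n) (Copp l)) < eps.
Proof. intros u Hu.
 assert (H1 : Cauchy_crit (fun n => fst (u n))).
 { intros e He. destruct (Hu e He) as [N HN]. exists N. intros n m Hn Hm. unfold Rdist.
   eapply Rle_lt_trans; [|apply (HN n m); lia]. pose proof (Re_le_Cmod (Cadd (u n) (Copp (u m)))). simpl in H.
   unfold Rminus; auto. }
 assert (H2 : Cauchy_crit (fun n => snd (u n))).
 { intros e He. destruct (Hu e He) as [N HN]. exists N. intros n m Hn Hm. unfold Rdist.
   eapply Rle_lt_trans; [|apply (HN n m); lia]. pose proof (Im_le_Cmod (Cadd (u n) (Copp (u m)))). simpl in H.
   unfold Rminus; auto. }
 destruct (Rcomplete.R_complete _ H1) as [a Ha]. destruct (Rcomplete.R_complete _ H2) as [b Hb].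
 exists (a, b). intros e He. destruct (Ha (e/2)) as [N1 HN1]; [lra|]. destruct (Hb (e/2)) as [N2 HN2]; [lra|].
 exists (N1 + N2)%nat. intros n Hn. eapply Rle_lt_trans; [apply Cmod_le_sum|]. simpl.
 specialize (HN1 n ltac:(lia)); specialize (HN2 n ltac:(lia)). unfold Rdist in *. unfold Rminus in *. lra. Qed.

Definition CC : CBanach.
Proof.
 refine (Build_CBanach Complex Cadd C0 Copp Cmul Cmod _ _ _ _ _ _ _ _ _ _ _ _ _).
 - intros; cring.
 - intros; cring.
 - intros; unfold C0; cring.
 - intros; unfold C0; cring.
 - intros; cring.
 - intros; unfold C1; cring.
 - intros; cring.
 - intros; cring.
 - apply Cmod_nonneg.
 - apply Cmod_eq0.
 - apply Cmod_add.
 - apply Cmod_mul.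
 - apply C_complete.
Defined.

Definition cexp (b : Complex) : Complex := @E CC (fun w => Cmul b w) 1 C1.

Lemma BL_Cmul b : BL (X:=CC) (fun w => Cmul b w).
Proof. split; [|split]. intros; simpl; cring. intros; simpl; cring.
 exists (Cmod b). intros; simpl. rewrite Cmod_mul. lra. Qed.

Lemma iter_Cmul b k w : Nat.iter k (fun w => Cmul b w) w = Cmul (Cpow b k) w.
Proof. induction k; simpl. unfold C1; cring. rewrite IHk. destruct b, w, (Cpow (r, r0) k); cring. Qed.

Lemma cexp_series b : vser (X:=CC) (fun k => Cmul (RtoC (ecoef 1 k)) (Cpow b k)) (cexp b).
Proof. pose proof (proj1 (pser_spec (X:=CC) _ _ C1 (pok_exp (X:=CC) _ 1 (BL_Cmul b)))).

 eapply vcv_ext; [|exact H]. intro n. apply vsum_ext. intros k _. unfold pterm. simpl.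
 rewrite iter_Cmul, Cmul_1r; auto. Qed.

Section Shift.
Context {X : CBanach}.

Lemma E_scalar b (y : X) : E (fun z => vscal b z) 1 y = vscal (cexp b) y.
Proof. apply pser_eq. apply pok_exp, bl_cst.
 pose proof (cexp_series b). unfold vser in *.
 apply (vcv_ext (fun n => vscal (vsum (X:=CC) (fun k => Cmul (RtoC (ecoef 1 k)) (Cpow b k)) n) y)).
 { assert (Hi : forall k, Nat.iter k (fun z => vscal b z) y = vscal (Cpow b k) y).
   { induction k; simpl. symmetry; apply vscal_1. rewrite IHk, vscal_assoc; auto. }
   intro n. induction n.
   - unfold pterm. simpl. rewrite Cmul_1r; auto.
   - change (vsum (X:=CC) ?f (S n)) with (Cadd (vsum (X:=CC) f n) (f (S n))).
     rewrite vscal_distr_c, IHn. simpl vsum. f_equal. unfold pterm. rewrite Hi, vscal_assoc; auto. }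
 apply vcv_scal_c. exact H. Qed.

Lemma E_smul (B : X -> X) s y : BL B -> E (fun z => vscal (RtoC s) (B z)) 1 y = E B s y.
Proof. intro HB. symmetry. apply pser_eq. apply pok_exp; auto.
 eapply vcv_ext; [|apply (pser_spec _ _ y (pok_exp _ 1 (bl_smul B (RtoC s) HB)))].
 intro n. apply vsum_ext. intros k _. unfold pterm.
 assert (Nat.iter k (fun z => vscal (RtoC s) (B z)) y = vscal (RtoC (s ^ k)) (Nat.iter k B y)).
 { induction k; simpl. rewrite RtoC_1, vscal_1; auto. rewrite IHk, bl_scal, vscal_assoc, <- RtoC_mul; auto. }
 rewrite H, vscal_assoc, <- RtoC_mul. f_equal. f_equal. unfold ecoef. rewrite pow1. unfold Rdiv. ring. Qed.

Lemma bl_ext (B B' : X -> X) : BL B -> (forall z, B z = B' z) -> BL B'.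
Proof. intros HB Hext. destruct (bl_bound B HB) as [M [_ HM]]. split; [|split].
 intros; rewrite <- !Hext; apply (bl_add B); auto.
 intros; rewrite <- !Hext; apply (bl_scal B); auto.
 exists M; intros; rewrite <- Hext; auto. Qed.

Lemma E_ext (B B' : X -> X) t y : BL B -> (forall z, B z = B' z) -> E B t y = E B' t y.
Proof. intros HB Hext. assert (BL B') by (apply (bl_ext B); auto).
 apply pser_eq. apply pok_exp; auto.
 eapply vcv_ext; [|apply (proj1 (pser_spec _ _ y (pok_exp B' t H)))].
 intro n. apply vsum_ext. intros k _. unfold pterm. rewrite (iter_ext B' B); auto. Qed.

Lemma E_semigroup (T : X -> X) s t y : BL T -> E T (s + t) y = E T s (E T t y).
Proof. intro HT.
 rewrite <- (E_smul T s), <- (E_smul T t), <- (E_smul T (s + t)) by auto.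
 pose proof (exp_product (fun z => vscal (RtoC s) (T z)) (fun z => vscal (RtoC t) (T z))
   (bl_smul T _ HT) (bl_smul T _ HT)) as HP.
 rewrite <- HP. apply E_ext. apply bl_smul; auto.
 intro z. unfold S12. rewrite RtoC_add, vscal_distr_c; auto.
 intros z. rewrite !(bl_scal T) by auto. rewrite !vscal_assoc, Cmul_comm; auto. Qed.

Definition Ashift (T : X -> X) (z0 : Complex) := fun z => vsub (T z) (vscal z0 z).

Lemma Ashift_bl T z0 : BL T -> BL (Ashift T z0).
Proof. intro HT. apply (bl_ext (fun z => vadd (T z) (vscal (Copp z0) z))).
 apply bl_plus; auto. apply bl_cst.
 intro z. unfold Ashift, vsub. rewrite vscal_opp_c; auto. Qed.

Lemma E_shift (T : X -> X) z0 t y : BL T ->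
  E (Ashift T z0) t y = vscal (cexp (Cmul (RtoC t) (Copp z0))) (E T t y).
Proof. intro HT. set (b := Cmul (RtoC t) (Copp z0)).
 assert (HA : BL (Ashift T z0)) by (apply Ashift_bl; auto).
 assert (HtT : BL (fun z => vscal (RtoC t) (T z))) by (apply bl_smul; auto).
 assert (Hb : BL (fun z : X => vscal b z)) by apply bl_cst.
 assert (Hcm : forall z, vscal (RtoC t) (T (vscal b z)) = vscal b (vscal (RtoC t) (T z))).
 { intro z. rewrite (bl_scal T) by auto. rewrite !vscal_assoc, Cmul_comm; auto. }
 rewrite <- (E_smul (Ashift T z0) t y HA).
 rewrite (E_ext (fun z => vscal (RtoC t) (Ashift T z0 z)) (S12 (fun z => vscal (RtoC t) (T z)) (fun z => vscal b z)) 1 y).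
 2: { apply bl_smul; auto. }
 2: { intro z. unfold S12, Ashift, b. rewrite vscal_sub, vscal_assoc. unfold vsub. f_equal.
      rewrite <- vscal_opp_c. f_equal. cring. }
 rewrite (exp_product _ _ HtT Hb Hcm).
 rewrite E_scalar, (E_smul T t _ HT).
 apply (bl_scal (E T t)). apply E_bl; auto. Qed.

End Shift.

Lemma CC_vcv_real (u : nat -> R) l : Un_cv u l -> vcv (X:=CC) (fun n => RtoC (u n)) (RtoC l).
Proof. intros H e He. destruct (H e He) as [N HN]. exists N. intros n Hn. simpl.
 replace (Cadd (RtoC (u n)) (Copp (RtoC l))) with (RtoC (u n - l)) by (unfold RtoC; cring).
 rewrite Cmod_RtoC. apply HN; auto. Qed.

Lemma cexp_real r : cexp (RtoC r) = RtoC (exp r).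
Proof. apply (vser_unique (X:=CC) _ _ _ (cexp_series (RtoC r))). unfold vser.
 apply (vcv_ext (X:=CC) (fun n => RtoC (sum_f_R0 (fun k => r ^ k / INR (fact k)) n))).
 { intro n. induction n. simpl. unfold ecoef, RtoC; cring.
   change (vsum (X:=CC) ?f (S n)) with (Cadd (vsum (X:=CC) f n) (f (S n))). rewrite <- IHn.
   rewrite <- RtoC_pow, <- RtoC_mul, <- RtoC_add. f_equal.
   change (sum_f_R0 (fun k => r ^ k / INR (fact k)) (S n)) with
     (sum_f_R0 (fun k => r ^ k / INR (fact k)) n + r ^ (S n) / INR (fact (S n))).
   unfold ecoef. rewrite pow1. unfold Rdiv. ring. }
 apply CC_vcv_real. apply exp_series_cv. Qed.

Definition Cconj (z : Complex) : Complex := (fst z, - snd z).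

Lemma cexp_conj b : cexp (Cconj b) = Cconj (cexp b).
Proof. apply (vser_unique (X:=CC) _ _ _ (cexp_series (Cconj b))). unfold vser.
 pose proof (cexp_series b) as H.
 apply (vcv_ext (X:=CC) (fun n => Cconj (vsum (X:=CC) (fun k => Cmul (RtoC (ecoef 1 k)) (Cpow b k)) n))).
 { intro n. induction n.
   - simpl. unfold Cconj, RtoC, C1. cring.
   - change (vsum (X:=CC) ?f (S n)) with (Cadd (vsum (X:=CC) f n) (f (S n))). rewrite <- IHn.
     assert (forall k, Cconj (Cpow b k) = Cpow (Cconj b) k).
     { induction k; simpl. unfold Cconj, C1; cring. rewrite <- IHk. unfold Cconj; cring. }
     rewrite <- H0. unfold Cconj, RtoC. cring. }
 intros e He. destruct (H e He) as [N HN]. exists N. intros n Hn. specialize (HN n Hn). simpl in *.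
 replace (Cadd (Cconj (vsum (X:=CC) (fun k => Cmul (RtoC (ecoef 1 k)) (Cpow b k)) n)) (Copp (Cconj (cexp b))))
   with (Cconj (Cadd (vsum (X:=CC) (fun k => Cmul (RtoC (ecoef 1 k)) (Cpow b k)) n) (Copp (cexp b)))).
 2: { unfold Cconj; cring. }
 replace (Cmod (Cconj _)) with (Cmod (Cadd (vsum (X:=CC) (fun k => Cmul (RtoC (ecoef 1 k)) (Cpow b k)) n) (Copp (cexp b)))); auto.
 unfold Cmod, Cconj. simpl. f_equal. ring. Qed.

Lemma cexp_mul_apply b w : @E CC (fun z => Cmul b z) 1 w = Cmul (cexp b) w.
Proof. exact (@E_scalar CC b w). Qed.

Lemma cexp_add b b' : Cmul (cexp b) (cexp b') = cexp (Cadd b b').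
Proof.
 assert (H1 : BL (X:=CC) (fun z => Cmul b z)) by apply BL_Cmul.
 assert (H2 : BL (X:=CC) (fun z => Cmul b' z)) by apply BL_Cmul.
 assert (Hc : forall z, Cmul b (Cmul b' z) = Cmul b' (Cmul b z)) by (intros; cring).
 pose proof (@exp_product CC _ _ H1 H2 Hc C1) as HP.
 rewrite <- cexp_mul_apply. change (cexp b') with (@E CC (fun w => Cmul b' w) 1 C1).
 rewrite <- HP. unfold cexp. apply (@E_ext CC). apply (@S12_bl CC); auto.
 intro z. unfold S12. simpl. cring. Qed.

Lemma Cmod_cexp b : Cmod (cexp b) = exp (fst b).
Proof.
 assert (H : Cmul (cexp b) (Cconj (cexp b)) = RtoC (exp (fst b) * exp (fst b))).
 { rewrite <- cexp_conj, cexp_add, <- exp_plus. rewrite <- cexp_real. f_equal. unfold Cconj, RtoC. apply Cext; simpl; ring. }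
 unfold Cmod. replace (fst (cexp b) ^ 2 + snd (cexp b) ^ 2) with (exp (fst b) * exp (fst b)).
 apply sqrt_square. left; apply exp_pos.
 apply (f_equal fst) in H. unfold Cconj, RtoC in H. simpl in H. rewrite <- H. ring. Qed.

Section W.
Variable w : R -> R.
Hypothesis Hw : is_regular_weight w.

Definition wf (t : R) := ln (w t) / (1 + t ^ 2).

Lemma wf_cont t : continuity_pt wf t.
Proof. destruct Hw as [[Hc [H1 _]] _]. unfold wf.
 apply (continuity_pt_div (fun t => ln (w t)) (fun t => 1 + t ^ 2)).
 - apply (continuity_pt_comp w ln). apply Hc. apply derivable_continuous_pt.
   exists (/ w t). apply derivable_pt_lim_ln. pose proof (H1 t); lra.
 - apply (continuity_pt_plus (fct_cte 1) (fun y => y ^ 2)).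
   apply continuity_pt_const. intros x y; reflexivity.
   apply derivable_continuous_pt, derivable_pt_pow.
 - pose proof (pow2_ge_0 t). lra. Qed.

Lemma wf_int p q : p <= q -> Riemann_integrable wf p q.
Proof. intro H. apply continuity_implies_RiemannInt; auto. intros; apply wf_cont. Qed.

Lemma int_cst_lb p q c (pr : Riemann_integrable wf p q) : p <= q -> (forall t, p < t < q -> c <= wf t) ->
  c * (q - p) <= RiemannInt pr.
Proof. intros Hpq Hc. assert (pc : Riemann_integrable (fct_cte c) p q) by apply RiemannInt_P14.
 rewrite <- (RiemannInt_P15 pc). apply RiemannInt_P19; auto. Qed.

Lemma pow2_ge1 n : 1 <= 2 ^ n.
Proof. induction n; simpl; lra. Qed.

Lemma weight_pos a : 0 < a -> exists h, 0 < h /\ w h < exp (a * h).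
Proof. intro Ha. apply NNPP. intro Hn.
 assert (Hl : forall t, 0 < t -> a * t <= ln (w t)).
 { intros t Ht. destruct Hw as [[_ [H1 _]] _]. apply Rnot_lt_le. intro Hc.
   apply Hn. exists t. split; auto. rewrite <- (exp_ln (w t)). apply exp_increasing; auto.
   pose proof (H1 t); lra. }
 assert (Hpiece : forall n, a / 5 * 1 <= a / (5 * 2 ^ n) * (2 ^ S n - 2 ^ n)).
 { intro n. simpl. pose proof (pow2_ge1 n). apply Req_le. field. lra. }
 assert (Hlb : forall n (pr : Riemann_integrable wf 1 (2 ^ n)), INR n * (a / 5) <= RiemannInt pr).
 { induction n; intro pr.
   - assert (E0 : RiemannInt pr = 0).
     { assert (pr0 : Riemann_integrable wf 1 1) by (apply wf_int; lra).
       rewrite (RiemannInt_P5 pr pr0). apply RiemannInt_P9. }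
     rewrite E0. simpl. lra.
   - pose proof (pow2_ge1 n).
     assert (p1 : Riemann_integrable wf 1 (2 ^ n)) by (apply wf_int; auto).
     assert (p2 : Riemann_integrable wf (2 ^ n) (2 ^ S n)) by (apply wf_int; simpl; lra).
     rewrite <- (RiemannInt_P26 p1 p2 pr). specialize (IHn p1).
     assert (a / (5 * 2 ^ n) * (2 ^ S n - 2 ^ n) <= RiemannInt p2).
     { apply int_cst_lb. simpl; lra. intros t [Ht1 Ht2]. simpl in Ht2. unfold wf.
       assert (0 < 1 + t ^ 2) by (pose proof (pow2_ge_0 t); lra).
       apply Rle_trans with (a * t / (1 + t ^ 2)).
       - unfold Rdiv. rewrite Rinv_mult. apply Rmult_le_reg_r with ((1 + t^2) * 5 * 2 ^ n). 
         apply Rmult_lt_0_compat; [|lra]. apply Rmult_lt_0_compat; lra.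
         field_simplify; try lra. simpl.
         assert (t * t <= 2 * 2 ^ n * t) by nra. assert (1 <= 2 ^ n * t) by nra.
         assert (a * (t * t) <= a * (2 * 2 ^ n * t)) by (apply Rmult_le_compat_l; lra).
         assert (a * 1 <= a * (2 ^ n * t)) by (apply Rmult_le_compat_l; lra). nra.
       - unfold Rdiv. apply Rmult_le_compat_r. left; apply Rinv_0_lt_compat; auto. apply Hl; lra. }
     specialize (Hpiece n). rewrite S_INR. lra. }
 destruct Hw as [_ [M HM]].
 destruct (INR_archimed (a / 5) M ltac:(lra)) as [k Hk'].
 assert (pr : Riemann_integrable wf 1 (2 ^ k)) by (apply wf_int, pow2_ge1).
 assert (RiemannInt pr <= M) by apply HM. specialize (Hlb k pr). lra. Qed.

Lemma weight_neg a : 0 < a -> exists h, 0 < h /\ w (- h) < exp (a * h).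
Proof. intro Ha. apply NNPP. intro Hn.
 assert (Hl : forall t, t < 0 -> a * (- t) <= ln (w t)).
 { intros t Ht. destruct Hw as [[_ [H1 _]] _]. apply Rnot_lt_le. intro Hc.
   apply Hn. exists (- t). split; [lra|]. rewrite Ropp_involutive. rewrite <- (exp_ln (w t)). apply exp_increasing; auto.
   pose proof (H1 t); lra. }
 assert (Hpiece : forall n, a / 5 * 1 <= a / (5 * 2 ^ n) * (- 2 ^ n - - 2 ^ S n)).
 { intro n. simpl. pose proof (pow2_ge1 n). apply Req_le. field. lra. }
 assert (Hlb : forall n (pr : Riemann_integrable wf (- 2 ^ n) (-1)), INR n * (a / 5) <= RiemannInt pr).
 { induction n; intro pr.
   - assert (E0 : RiemannInt pr = 0).
     { assert (pr0 : Riemann_integrable wf (-1) (-1)) by (apply wf_int; lra).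
       rewrite (RiemannInt_P5 pr pr0). apply RiemannInt_P9. }
     rewrite E0. simpl. lra.
   - pose proof (pow2_ge1 n).
     assert (p1 : Riemann_integrable wf (- 2 ^ n) (-1)) by (apply wf_int; lra).
     assert (p2 : Riemann_integrable wf (- 2 ^ S n) (- 2 ^ n)) by (apply wf_int; simpl; lra).
     rewrite <- (RiemannInt_P26 p2 p1 pr). specialize (IHn p1).
     assert (a / (5 * 2 ^ n) * (- 2 ^ n - - 2 ^ S n) <= RiemannInt p2).
     { apply int_cst_lb. simpl; lra. intros t [Ht1 Ht2]. simpl in Ht1. unfold wf.
       assert (0 < 1 + t ^ 2) by (pose proof (pow2_ge_0 t); lra).
       apply Rle_trans with (a * (- t) / (1 + t ^ 2)).
       - unfold Rdiv. rewrite Rinv_mult. apply Rmult_le_reg_r with ((1 + t^2) * 5 * 2 ^ n).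
         apply Rmult_lt_0_compat; [|lra]. apply Rmult_lt_0_compat; lra.
         field_simplify; try lra. simpl.
         assert (t * t <= 2 * 2 ^ n * (- t)) by nra. assert (1 <= 2 ^ n * (- t)) by nra.
         assert (a * (t * t) <= a * (2 * 2 ^ n * (- t))) by (apply Rmult_le_compat_l; lra).
         assert (a * 1 <= a * (2 ^ n * (- t))) by (apply Rmult_le_compat_l; lra). nra.
       - unfold Rdiv. apply Rmult_le_compat_r. left; apply Rinv_0_lt_compat; auto. apply Hl; lra. }
     specialize (Hpiece n). rewrite S_INR. lra. }
 destruct Hw as [_ [M HM]].
 destruct (INR_archimed (a / 5) M ltac:(lra)) as [k Hk'].
 assert (pr : Riemann_integrable wf (- 2 ^ k) (-1)) by (apply wf_int; pose proof (pow2_ge1 k); lra).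
 assert (RiemannInt pr <= M) by apply HM. specialize (Hlb k pr). lra. Qed.

Lemma weight_any a : a <> 0 -> exists tau, w tau < exp (a * tau).
Proof. intro Ha. destruct (Rlt_or_le 0 a).
 - destruct (weight_pos a H) as [h [_ Hh]]. eauto.
 - destruct (weight_neg (- a) ltac:(lra)) as [h [_ Hh]]. exists (- h).
   replace (a * - h) with (- a * h) by ring. auto. Qed.

End W.

Fixpoint bn (k : nat) : nat -> R :=
  match k with
  | O => fun _ => 1
  | S k' => fix g (n : nat) : R := match n with O => 1 | S n' => g n' + bn k' (S n') end
  end.

Lemma bn_0 n : bn 0 n = 1. Proof. reflexivity. Qed.
Lemma bn_S0 k : bn (S k) 0 = 1. Proof. reflexivity. Qed.
Lemma bn_SS k n : bn (S k) (S n) = bn (S k) n + bn k (S n). Proof. reflexivity. Qed.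
Lemma bn_k0 k : bn k 0 = 1. Proof. destruct k; reflexivity. Qed.
Lemma bn_pos k n : 0 <= bn k n.
Proof. revert n; induction k; intro n. simpl; lra. induction n. rewrite bn_S0; lra. rewrite bn_SS. pose proof (IHk (S n)); lra. Qed.

Definition Psum k q N := sum_f_R0 (fun n => bn k n * q ^ n) N.

Lemma Psum_nonneg k q N : 0 <= q -> 0 <= Psum k q N.
Proof. intro. apply cond_pos_sum. intro. apply Rmult_le_pos. apply bn_pos. apply pow_le; auto. Qed.
Lemma Psum_mono k q N : 0 <= q -> Psum k q N <= Psum k q (S N).
Proof. intro. unfold Psum. simpl. pose proof (bn_pos k (S N)). pose proof (pow_le q (S N) H).
 simpl in H1. assert (0 <= bn k (S N) * (q * q ^ N)) by (apply Rmult_le_pos; auto). lra. Qed.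

Lemma sum_S_decomp (f : nat -> R) N : sum_f_R0 f (S N) = f O + sum_f_R0 (fun i => f (S i)) N.
Proof. rewrite decomp_sum by lia. simpl pred. auto. Qed.

Lemma Psum0_S q N : Psum 0 q (S N) = 1 + q * Psum 0 q N.
Proof. unfold Psum. rewrite sum_S_decomp. rewrite scal_sum. simpl. f_equal. ring. apply sum_eq; intros; ring. Qed.

Lemma PsumS_S k q N : Psum (S k) q (S N) = Psum k q (S N) + q * Psum (S k) q N.
Proof. unfold Psum. rewrite !sum_S_decomp, scal_sum. cbv beta. rewrite !bn_k0.
 transitivity (1 * q ^ 0 + (sum_f_R0 (fun i => bn (S k) i * q ^ i * q) N + sum_f_R0 (fun i => bn k (S i) * q ^ S i) N)).
 f_equal. rewrite <- sum_plus. apply sum_eq; intros. rewrite bn_SS. simpl. ring. ring. Qed.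

Lemma Psum_bound k q N : 0 <= q < 1 -> Psum k q N <= (/ (1 - q)) ^ (S k).
Proof. intros [Hq0 Hq1]. assert (Hi : 0 < 1 - q) by lra.
 revert N; induction k; intro N.
 - assert (Psum 0 q N <= 1 + q * Psum 0 q N).
   { destruct N. unfold Psum; simpl. lra. rewrite Psum0_S. pose proof (Psum_mono 0 q N Hq0).
     apply Rplus_le_compat_l. apply Rmult_le_compat_l; auto. rewrite Psum0_S in H. lra. }
   simpl. rewrite Rmult_1_r. apply Rmult_le_reg_l with (1 - q); auto. rewrite Rinv_r by lra. lra.
 - assert (Psum (S k) q N <= Psum k q N + q * Psum (S k) q N).
   { destruct N. unfold Psum; simpl. rewrite bn_k0. pose proof (Rmult_le_pos q 1 Hq0 ltac:(lra)). lra.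
     rewrite PsumS_S at 1. apply Rplus_le_compat_l. apply Rmult_le_compat_l; auto. apply Psum_mono; auto. }
   specialize (IHk N). change ((/ (1 - q)) ^ S (S k)) with (/ (1 - q) * (/ (1 - q)) ^ S k).
   apply Rmult_le_reg_l with (1 - q); auto. rewrite <- Rmult_assoc, Rinv_r, Rmult_1_l by lra. lra. Qed.

Section Geo.
Context {X : CBanach}.
Variable Sop : X -> X.
Hypothesis HS : BL Sop.
Variable x : X.
Variables K0 q : R.
Hypothesis Hq : 0 <= q < 1.
Hypothesis HK0 : 0 <= K0.
Hypothesis Hgeo : forall n, vnorm (Nat.iter n Sop x) <= K0 * q ^ n.

Definition tv k n := vscal (RtoC (bn k n)) (Nat.iter n Sop x).
Definition vv k := vlim (vsum (tv k)).

Lemma vv_spec k : vser (tv k) (vv k) /\ vnorm (vv k) <= K0 * (/ (1 - q)) ^ (S k).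
Proof.
 destruct (abs_conv (tv k) (K0 * (/ (1 - q)) ^ (S k))) as [l [Hl Hn]].
 { intro n. apply Rle_trans with (K0 * Psum k q n).
   { unfold Psum. rewrite scal_sum. apply sum_Rle. intros m _. unfold tv.
     rewrite vscal_real_norm, Rabs_pos_eq by apply bn_pos. rewrite Rmult_assoc. apply Rmult_le_compat_l. apply bn_pos.
     rewrite Rmult_comm. apply Hgeo. }
   apply Rmult_le_compat_l; auto. apply Psum_bound; auto. }
 assert (vv k = l). { unfold vv. apply vlim_eq. exact Hl. }
 rewrite H; auto. Qed.

Lemma tv_k0 k : tv k 0 = x.
Proof. unfold tv. rewrite bn_k0, RtoC_1, vscal_1. reflexivity. Qed.

Lemma vadd_sub_swap (a b c d : X) : vsub a d = vadd b (vsub c d) -> vsub a b = c.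
Proof. intro H. assert (a = vadd b c).
 { apply (f_equal (fun z => vadd z d)) in H. rewrite vsub_add_r in H. rewrite H.
   rewrite <- vadd_assoc, vsub_add_r. auto. }
 rewrite H0, vadd_comm, vadd_sub_r. auto. Qed.

Lemma vv_rec0 : vsub (vv 0) (Sop (vv 0)) = x.
Proof. destruct (vv_spec 0) as [H0 _].
 pose proof (vser_shift _ _ H0) as Hs. rewrite tv_k0 in Hs.
 pose proof (bl_vser Sop _ _ HS H0) as HS0.
 assert (vsub (vv 0) x = Sop (vv 0)).
 { apply (vser_unique (fun k => tv 0 (S k))); auto. eapply vcv_ext; [|exact HS0].
   intro n. apply vsum_ext. intros k _. unfold tv. rewrite (bl_scal Sop) by auto. reflexivity. }
 rewrite <- H. unfold vsub. rewrite vopp_vadd, vopp_opp, vadd_assoc, vadd_opp, vadd_0l. auto. Qed.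

Lemma vv_rec k : vsub (vv (S k)) (Sop (vv (S k))) = vv k.
Proof. destruct (vv_spec (S k)) as [H1 _]. destruct (vv_spec k) as [H0 _].
 pose proof (vser_shift _ _ H1) as Hs1. rewrite tv_k0 in Hs1.
 pose proof (vser_shift _ _ H0) as Hs0. rewrite tv_k0 in Hs0.
 pose proof (bl_vser Sop _ _ HS H1) as HS1.
 pose proof (vser_add _ _ _ _ HS1 Hs0) as Hsum.
 apply (vadd_sub_swap _ _ _ x).
 apply (vser_unique (fun n => tv (S k) (S n))); auto. eapply vcv_ext; [|exact Hsum].
 intro n. apply vsum_ext. intros m _. unfold tv. rewrite (bl_scal Sop) by auto.
 rewrite bn_SS, RtoC_add, vscal_distr_c. reflexivity. Qed.

End Geo.

Lemma E_zero {X : CBanach} (B : X -> X) y : BL B -> E B 0 y = y.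
Proof. intro HB. apply pser_eq. apply pok_exp; auto.
 assert (vser (pterm (ecoef 0) B y) (vsum (pterm (ecoef 0) B y) 0)).
 { apply vser_finite. intros k Hk. unfold pterm, ecoef. destruct k. lia. simpl. rewrite Rmult_0_l.
   unfold Rdiv. rewrite Rmult_0_l, RtoC_0. apply vscal_C0. }
 simpl in H. unfold pterm, ecoef in H. simpl in H. replace (1 / 1) with 1 in H by field.
 rewrite RtoC_1, vscal_1 in H. auto. Qed.

Lemma exp_mul_pow r n : exp (INR n * r) = exp r ^ n.
Proof. induction n. simpl. rewrite Rmult_0_l. apply exp_0.
 rewrite S_INR, Rmult_plus_distr_r, Rmult_1_l, exp_plus, IHn. simpl. ring. Qed.

Section Main.
Context {X : CBanach}.
Variable T : X -> X.
Hypothesis HT : BL T.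
Variable x : X.
Variable w : R -> R.
Hypothesis Hwt : is_weight w.
Variable Cx : R.
Hypothesis HCx : 0 < Cx.
Hypothesis Hbd : forall t y, exp_op_at T t x y -> vnorm y <= Cx * w t.
Variable z0 : Complex.
Variable tau : R.
Hypothesis Htau : w tau < exp (fst z0 * tau).

Definition Aop := Ashift T z0.
Lemma HA : BL Aop. Proof. apply Ashift_bl; auto. Qed.
Definition Sop := E Aop tau.
Lemma HS : BL Sop. Proof. apply E_bl, HA. Qed.

Lemma iterS n : Nat.iter n Sop x = E Aop (INR n * tau) x.
Proof. induction n. simpl. rewrite Rmult_0_l, E_zero; auto. apply HA.
 simpl Nat.iter. rewrite IHn. unfold Sop. rewrite <- E_semigroup by apply HA. f_equal. rewrite S_INR; ring. Qed.

Definition qq := exp (- (fst z0 * tau)) * w tau.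
Definition K0 := Cx * w 0.

Lemma w_pos t : 1 <= w t. Proof. destruct Hwt as [_ [H _]]; auto. Qed.

Lemma qq_bounds : 0 <= qq < 1.
Proof. unfold qq. pose proof (exp_pos (- (fst z0 * tau))). pose proof (w_pos tau). split. nra.
 rewrite exp_Ropp. apply Rmult_lt_reg_l with (exp (fst z0 * tau)). apply exp_pos.
 rewrite <- Rmult_assoc, Rinv_r, Rmult_1_l, Rmult_1_r; auto. apply Rgt_not_eq, exp_pos. Qed.

Lemma K0_pos : 0 <= K0. Proof. unfold K0. pose proof (w_pos 0). nra. Qed.

Lemma w_iter n : w (INR n * tau) <= w 0 * w tau ^ n.
Proof. induction n. simpl. rewrite Rmult_0_l. lra.
 destruct Hwt as [_ [_ Hs]]. rewrite S_INR. replace ((INR n + 1) * tau) with (INR n * tau + tau) by ring.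
 eapply Rle_trans; [apply Hs|]. simpl. pose proof (w_pos tau). pose proof (w_pos (INR n * tau)).
 replace (w 0 * (w tau * w tau ^ n)) with (w 0 * w tau ^ n * w tau) by ring.
 apply Rmult_le_compat_r; lra. Qed.

Lemma Hgeo n : vnorm (Nat.iter n Sop x) <= K0 * qq ^ n.
Proof. rewrite iterS. unfold Aop. rewrite E_shift by auto. rewrite vnorm_scal, Cmod_cexp.
 simpl fst. rewrite Rmult_0_l, Rminus_0_r.
 pose proof (Hbd (INR n * tau) _ (E_spec T (INR n * tau) x HT)) as Hb.
 apply Rle_trans with (exp (INR n * tau * - fst z0) * (Cx * w (INR n * tau))).
 apply Rmult_le_compat_l. left; apply exp_pos. auto.
 replace (INR n * tau * - fst z0) with (INR n * (- (fst z0 * tau))) by ring. rewrite exp_mul_pow.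
 unfold K0, qq. rewrite Rpow_mult_distr. pose proof (w_iter n).
 pose proof (pow_le (exp (- (fst z0 * tau))) n (Rlt_le _ _ (exp_pos _))).
 replace (Cx * w 0 * (exp (- (fst z0 * tau)) ^ n * w tau ^ n)) with (exp (- (fst z0 * tau)) ^ n * (Cx * (w 0 * w tau ^ n))) by ring.
 apply Rmult_le_compat_l; auto. apply Rmult_le_compat_l; lra. Qed.

Definition vk k := vv Sop x k.
Lemma vk_spec k : vser (tv Sop x k) (vk k) /\ vnorm (vk k) <= K0 * (/ (1 - qq)) ^ (S k).
Proof. apply (vv_spec Sop x K0 qq qq_bounds K0_pos Hgeo). Qed.
Lemma vk_rec0 : vsub (vk 0) (Sop (vk 0)) = x.
Proof. apply (vv_rec0 Sop HS x K0 qq qq_bounds K0_pos Hgeo). Qed.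
Lemma vk_rec k : vsub (vk (S k)) (Sop (vk (S k))) = vk k.
Proof. apply (vv_rec Sop HS x K0 qq qq_bounds K0_pos Hgeo). Qed.

Definition gcoef k := ecoef tau (S k).
Definition Gop := pser gcoef Aop.

Lemma pok_G : pok gcoef Aop.
Proof. destruct (bl_bound Aop HA) as [M [HM0 HM]]. exists M, (Rabs tau * exp (Rabs tau * M)).
 split; auto; split; auto. intro n. unfold gcoef.
 apply Rle_trans with (Rabs tau * sum_f_R0 (fun k => (Rabs tau * M) ^ k / INR (fact k)) n).
 - rewrite scal_sum. apply sum_Rle. intros k _. rewrite ecoef_abs. unfold Rdiv.
   rewrite Rpow_mult_distr. simpl pow.
   assert (INR (fact k) <= INR (fact (S k))). { apply le_INR. rewrite fact_simpl. lia. }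
   pose proof (INR_fact_lt_0 k). pose proof (Rabs_pos tau). pose proof (pow_le (Rabs tau) k H1). pose proof (pow_le M k HM0).
   assert (/ INR (fact (S k)) <= / INR (fact k)) by (apply Rinv_le_contravar; auto).
   assert (0 <= Rabs tau * Rabs tau ^ k * M ^ k) by (repeat apply Rmult_le_pos; auto).
   replace (Rabs tau * Rabs tau ^ k * / INR (fact (S k)) * M ^ k) with ((Rabs tau * Rabs tau ^ k * M ^ k) * / INR (fact (S k))) by ring.
   replace (Rabs tau ^ k * M ^ k * / INR (fact k) * Rabs tau) with ((Rabs tau * Rabs tau ^ k * M ^ k) * / INR (fact k)) by ring.
   apply Rmult_le_compat_l; auto.
 - apply Rmult_le_compat_l. apply Rabs_pos. apply expsum_le. apply Rmult_le_pos; auto. apply Rabs_pos. Qed.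

Lemma HG : BL Gop. Proof. apply pser_bl. apply HA. apply pok_G. Qed.

Lemma AG y : Aop (Gop y) = vsub (Sop y) y.
Proof. pose proof (pser_applyB gcoef Aop y HA pok_G) as H1.
 pose proof (vser_shift _ _ (proj1 (pser_spec (ecoef tau) Aop y (pok_exp Aop tau HA)))) as H2.
 assert (E0 : pterm (ecoef tau) Aop y 0 = y) by (unfold pterm; rewrite ecoef_0, RtoC_1, vscal_1; auto).
 rewrite E0 in H2.
 apply (vser_unique _ _ _ H1). eapply vcv_ext; [|exact H2]. intro n. apply vsum_ext. intros k _.
 unfold pterm, gcoef. reflexivity. Qed.

Lemma AG_comm y : Aop (Gop y) = Gop (Aop y).
Proof. apply pser_comm; auto. apply HA. apply pok_G. apply HA. Qed.

Definition R0 (y : X) := vsub (vscal z0 y) (T y).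

Lemma R0_eq y : R0 y = vopp (Aop y).
Proof. unfold R0, Aop, Ashift, vsub. rewrite vopp_vadd, vopp_opp, vadd_comm. auto. Qed.

Lemma R0_G y : R0 (Gop y) = vsub y (Sop y).
Proof. rewrite R0_eq, AG. unfold vsub. rewrite vopp_vadd, vopp_opp, vadd_comm. auto. Qed.

Lemma R0_comm y : R0 (Gop y) = Gop (R0 y).
Proof. rewrite !R0_eq, AG_comm, (bl_opp Gop) by apply HG. auto. Qed.

Lemma R0_bl : BL R0.
Proof. apply (bl_ext (fun y => vopp (Aop y))). 
 apply (bl_ext (fun y => vscal (Copp C1) (Aop y))). apply bl_smul, HA. intro; rewrite <- vopp_scal; auto.
 intro; rewrite R0_eq; auto. Qed.

Definition ak k := vscal (Cpow (Copp C1) k) (Nat.iter (S k) Gop (vk k)).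

Lemma R0_iterG k y : R0 (Nat.iter k Gop y) = Nat.iter k Gop (R0 y).
Proof. apply iter_comm. intro; apply R0_comm. Qed.

Lemma ak_rec0 : R0 (ak 0) = x.
Proof. unfold ak. simpl Cpow. rewrite vscal_1. simpl. rewrite R0_G. apply vk_rec0. Qed.

Lemma ak_rec k : R0 (ak (S k)) = vopp (ak k).
Proof. unfold ak. rewrite (bl_scal R0) by apply R0_bl.
 rewrite iter_S', R0_iterG, R0_G, vk_rec.
 change (Cpow (Copp C1) (S k)) with (Cmul (Copp C1) (Cpow (Copp C1) k)).
 rewrite <- vscal_assoc, vscal_opp_c, vscal_1. auto. Qed.

Definition rho0 := / (1 - qq).

Lemma ak_bound : exists rho, 0 < rho /\ forall k, vnorm (ak k) <= K0 * rho ^ (S k).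
Proof. destruct (bl_bound Gop HG) as [g [Hg0 Hg]].
 assert (Hr0 : 0 < rho0). { unfold rho0. pose proof qq_bounds. apply Rinv_0_lt_compat; lra. }
 exists (g * rho0 + 1). split. nra.
 intro k. unfold ak. rewrite vnorm_scal, Cmod_pow, Cmod_Copp, Cmod_C1, pow1, Rmult_1_l.
 eapply Rle_trans; [apply (iter_bound Gop g); auto|].
 destruct (vk_spec k) as [_ Hv]. fold rho0 in Hv.
 apply Rle_trans with (g ^ S k * (K0 * rho0 ^ S k)). apply Rmult_le_compat_l; auto. apply pow_le; auto.
 rewrite <- Rmult_assoc, (Rmult_comm (g ^ S k)), Rmult_assoc, <- Rpow_mult_distr.
 apply Rmult_le_compat_l. apply K0_pos. apply pow_incr. split. nra. lra. Qed.

End Main.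

Lemma geo_sum s N : 0 <= s < 1 -> sum_f_R0 (fun k => s ^ k) N <= / (1 - s).
Proof. intro H. pose proof (Psum_bound 0 s N H). unfold Psum in H0. simpl in H0.
 rewrite Rmult_1_r in H0. eapply Rle_trans; [|exact H0]. apply Req_le, sum_eq; intros; ring. Qed.

Lemma sum_trunc (h : nat -> R) N M : (N <= M)%nat -> (forall k, (N < k <= M)%nat -> h k = 0) ->
  sum_f_R0 h M = sum_f_R0 h N.
Proof. intros. rewrite !sum_gs. apply (gs_trunc R Rplus 0); auto. intros; ring. Qed.

Lemma binC_eq n i : (i <= n)%nat -> INR (fact n) * acoef i (n - i) = Binomial.C n i.
Proof. intro H. unfold acoef, ecoef, Binomial.C. rewrite !pow1.
 pose proof (INR_fact_neq_0 i). pose proof (INR_fact_neq_0 (n - i)). field; auto. Qed.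

Lemma binC_pos n i : 0 <= Binomial.C n i.
Proof. unfold Binomial.C. apply Rmult_le_pos. apply pos_INR. left. apply Rinv_0_lt_compat.
 apply Rmult_lt_0_compat; apply INR_fact_lt_0. Qed.

Lemma Cbinom u v n : vsum (X:=CC) (fun i => Cmul (RtoC (Binomial.C n i)) (Cmul (Cpow u i) (Cpow v (n - i)))) n
   = Cpow (Cadd u v) n.
Proof.
 assert (H1 : BL (X:=CC) (fun z => Cmul u z)) by apply BL_Cmul.
 assert (H2 : BL (X:=CC) (fun z => Cmul v z)) by apply BL_Cmul.
 assert (Hc : forall z, Cmul u (Cmul v z) = Cmul v (Cmul u z)) by (intros; cring).
 pose proof (@Dg_eq CC _ _ H1 H2 Hc C1 n) as HD.
 unfold Dg, W in HD.
 assert (HS : Nat.iter n (@S12 CC (fun z => Cmul u z) (fun z => Cmul v z)) C1 = Cpow (Cadd u v) n).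
 { rewrite (iter_ext (X:=CC) _ (fun z => Cmul (Cadd u v) z)). rewrite iter_Cmul, Cmul_1r. auto.
   intro z. unfold S12. simpl. cring. }
 rewrite HS in HD.
 apply (f_equal (fun c => Cmul (RtoC (INR (fact n))) c)) in HD.
 rewrite Cmul_assoc, <- RtoC_mul in HD. unfold ecoef in HD. rewrite pow1 in HD.
 replace (INR (fact n) * (1 / INR (fact n))) with 1 in HD by (field; apply INR_fact_neq_0).
 rewrite RtoC_1, Cmul_1l in HD. rewrite <- HD.
 rewrite (vsum_lin (X:=CC) (fun c => Cmul (RtoC (INR (fact n))) c)) by (intros; simpl; cring).
 apply (vsum_ext (X:=CC)). intros i Hi. rewrite !iter_Cmul, Cmul_1r. simpl.
 rewrite <- binC_eq by auto. rewrite RtoC_mul. cring. Qed.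

Lemma vsum_scal_c {X : CBanach} (c : nat -> Complex) (v : X) n :
  vsum (fun j => vscal (c j) v) n = vscal (vsum (X:=CC) c n) v.
Proof. induction n; simpl; auto. rewrite IHn, vscal_distr_c; auto. Qed.

Section PS.
Context {X : CBanach}.
Variable a : nat -> X.
Variables K0 rho : R.
Hypothesis HK0 : 0 <= K0.
Hypothesis Hrho : 0 < rho.
Hypothesis Ha : forall k, vnorm (a k) <= K0 * rho ^ (S k).
Variable z0 : Complex.

Definition pterm_c z k := vscal (Cpow (Csub z z0) k) (a k).
Definition psum z := vlim (vsum (pterm_c z)).

Lemma psum_spec z : Cmod (Csub z z0) * rho < 1 -> vser (pterm_c z) (psum z).
Proof. intro Hz. set (s := Cmod (Csub z z0) * rho).
 assert (Hs : 0 <= s < 1) by (split; auto; unfold s; apply Rmult_le_pos; [apply Cmod_nonneg|lra]).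
 destruct (abs_conv (pterm_c z) (K0 * rho * / (1 - s))) as [l [Hl _]].
 { intro n. apply Rle_trans with (K0 * rho * sum_f_R0 (fun k => s ^ k) n).
   rewrite scal_sum. apply sum_Rle. intros k _. unfold pterm_c. rewrite vnorm_scal, Cmod_pow.
   unfold s. rewrite Rpow_mult_distr. eapply Rle_trans. apply Rmult_le_compat_l. apply pow_le, Cmod_nonneg. apply Ha.
   simpl pow. apply Req_le. ring.
   apply Rmult_le_compat_l. apply Rmult_le_pos; lra. apply geo_sum; auto. }
 unfold psum. rewrite (vlim_eq _ l); auto. Qed.

Definition rr := / (2 * rho).

Lemma rr_pos : 0 < rr. Proof. unfold rr. apply Rinv_0_lt_compat. lra. Qed.

Lemma dbl_bound d1 d2 N : 0 <= d1 -> 0 <= d2 -> d1 + d2 <= rr ->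
  sum_f_R0 (fun k => sum_f_R0 (fun j => if Nat.leb j k then Binomial.C k j * d2 ^ j * d1 ^ (k - j) * vnorm (a k) else 0) N) N
  <= 2 * K0 * rho.
Proof. intros H1 H2 H12.
 apply Rle_trans with (sum_f_R0 (fun k => (d2 + d1) ^ k * vnorm (a k)) N).
 { apply sum_Rle. intros k _. rewrite Binomial.binomial, Rmult_comm, scal_sum.
   destruct (Compare_dec.le_lt_dec N k).
   - apply Rle_trans with (sum_f_R0 (fun j => if Nat.leb j k then Binomial.C k j * d2 ^ j * d1 ^ (k - j) * vnorm (a k) else 0) k).
     apply sum_mono_n; auto. intro j. destruct (Nat.leb j k). pose proof (binC_pos k j). pose proof (vnorm_nonneg (a k)).
     pose proof (pow_le d2 j H2); pose proof (pow_le d1 (k - j) H1). apply Rmult_le_pos; [apply Rmult_le_pos; [apply Rmult_le_pos|]|]; auto. lra.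
     apply Req_le, sum_eq. intros j Hj. rewrite (proj2 (Nat.leb_le j k) Hj). ring.
   - rewrite (sum_trunc _ k N). 2: lia. 2: { intros j Hj. rewrite (proj2 (Nat.leb_gt j k)) by lia. auto. }
     apply Req_le, sum_eq. intros j Hj. rewrite (proj2 (Nat.leb_le j k) Hj). ring. }
 apply Rle_trans with (sum_f_R0 (fun k => K0 * rho * (/ 2) ^ k) N).
 { apply sum_Rle. intros k _. eapply Rle_trans. apply Rmult_le_compat_l. apply pow_le; lra. apply Ha.
   replace ((d2 + d1) ^ k * (K0 * rho ^ S k)) with (K0 * rho * ((d2 + d1) * rho) ^ k) by (rewrite Rpow_mult_distr; simpl; ring).
   apply Rmult_le_compat_l. apply Rmult_le_pos; lra. apply pow_incr. split.
   apply Rmult_le_pos; lra. unfold rr in H12. apply Rmult_le_reg_r with (/ rho). apply Rinv_0_lt_compat; lra.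
   rewrite Rmult_assoc, Rinv_r, Rmult_1_r by lra. rewrite Rinv_mult in H12. lra. }
 replace (sum_f_R0 (fun k => K0 * rho * (/ 2) ^ k) N) with (K0 * rho * sum_f_R0 (fun k => (/ 2) ^ k) N)
   by (rewrite scal_sum; apply sum_eq; intros; ring).
 replace (2 * K0 * rho) with (K0 * rho * / (1 - / 2)) by field.
 apply Rmult_le_compat_l. apply Rmult_le_pos; lra. apply geo_sum. lra. Qed.

End PS.

Lemma term_le_sum (f : nat -> R) j N : (forall k, 0 <= f k) -> (j <= N)%nat -> f j <= sum_f_R0 f N.
Proof. intros Hf H. induction H. destruct j. simpl; lra. simpl. pose proof (cond_pos_sum f j Hf). lra.
 simpl. pose proof (Hf (S m)). lra. Qed.

Lemma Csub_tri z z1 z0 : Cmod (Csub z z0) <= Cmod (Csub z z1) + Cmod (Csub z1 z0).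
Proof. replace (Csub z z0) with (Cadd (Csub z z1) (Csub z1 z0)) by (unfold Csub; cring). apply Cmod_add. Qed.

Section Rec.
Context {X : CBanach}.
Variable a : nat -> X.
Variables K0 rho : R.
Hypothesis HK0 : 0 <= K0.
Hypothesis Hrho : 0 < rho.
Hypothesis Ha : forall k, vnorm (a k) <= K0 * rho ^ (S k).
Variable z0 : Complex.

Definition Gc z1 k j := if Nat.leb j k then vscal (Cmul (RtoC (Binomial.C k j)) (Cpow (Csub z1 z0) (k - j))) (a k) else vzero.
Definition bc z1 j := vlim (vsum (fun k => Gc z1 k j)).

Lemma Gc_norm z1 k j : vnorm (Gc z1 k j) =
  if Nat.leb j k then Binomial.C k j * Cmod (Csub z1 z0) ^ (k - j) * vnorm (a k) else 0.
Proof. unfold Gc. destruct (Nat.leb j k). rewrite vnorm_scal, Cmod_mul, Cmod_RtoC, Cmod_pow, Rabs_pos_eq by apply binC_pos. auto.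
 apply vnorm_zero. Qed.

Lemma bc_spec z1 j : Cmod (Csub z1 z0) < rr rho -> vser (fun k => Gc z1 k j) (bc z1 j).
Proof. intro Hz. set (d1 := Cmod (Csub z1 z0)) in *. set (r1 := rr rho - d1).
 assert (Hd1 : 0 <= d1) by apply Cmod_nonneg. assert (Hr1 : 0 < r1) by (unfold r1; lra).
 destruct (abs_conv (fun k => Gc z1 k j) (2 * K0 * rho / r1 ^ j)) as [l [Hl _]].
 { intro N. pose proof (pow_lt r1 j Hr1).
   apply Rmult_le_reg_l with (r1 ^ j); auto. replace (r1 ^ j * (2 * K0 * rho / r1 ^ j)) with (2 * K0 * rho) by (field; lra).
   set (phi := fun k j' => if Nat.leb j' k then Binomial.C k j' * r1 ^ j' * d1 ^ (k - j') * vnorm (a k) else 0).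
   assert (Hphi : forall k j', 0 <= phi k j').
   { intros. unfold phi. destruct (Nat.leb j' k). pose proof (binC_pos k j'). pose proof (vnorm_nonneg (a k)).
     pose proof (pow_le r1 j' (Rlt_le _ _ Hr1)); pose proof (pow_le d1 (k - j') Hd1).
     apply Rmult_le_pos; [apply Rmult_le_pos; [apply Rmult_le_pos|]|]; auto. lra. }
   set (N' := Nat.max N j).
   apply Rle_trans with (sum_f_R0 (fun k => sum_f_R0 (fun j' => phi k j') N') N').
   2: { apply (dbl_bound a K0 rho HK0 Hrho Ha d1 r1 N'); auto; unfold r1; lra. }
   apply Rle_trans with (sum_f_R0 (fun k => phi k j) N').
   - rewrite scal_sum. apply Rle_trans with (sum_f_R0 (fun k => phi k j) N).
     apply Req_le, sum_eq. intros k _. rewrite Gc_norm. unfold phi. fold d1. destruct (Nat.leb j k); ring.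
     apply sum_mono_n; auto. lia.
   - apply sum_Rle. intros k _. apply (term_le_sum (fun j' => phi k j')); auto. lia. }
 unfold bc. rewrite (vlim_eq _ l); auto. Qed.

Lemma recenter z1 z : Cmod (Csub z1 z0) < rr rho -> Cmod (Csub z z1) < rr rho - Cmod (Csub z1 z0) ->
  vser (fun j => vscal (Cpow (Csub z z1) j) (bc z1 j)) (psum a z0 z).
Proof. intros Hz1 Hz. set (d1 := Cmod (Csub z1 z0)) in *. set (d2 := Cmod (Csub z z1)) in *.
 assert (Hd1 : 0 <= d1) by apply Cmod_nonneg. assert (Hd2 : 0 <= d2) by apply Cmod_nonneg.
 set (F := fun k j => vscal (Cpow (Csub z z1) j) (Gc z1 k j)).
 assert (HB : forall N, Aabs F N <= 2 * K0 * rho).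
 { intro N. unfold Aabs. rewrite <- !sum_gs.
   apply Rle_trans with (sum_f_R0 (fun k => sum_f_R0 (fun j => if Nat.leb j k then Binomial.C k j * d2 ^ j * d1 ^ (k - j) * vnorm (a k) else 0) N) N).
   2: { apply (dbl_bound a K0 rho HK0 Hrho Ha d1 d2 N); auto; lra. }
   apply Req_le. apply sum_eq. intros k _. rewrite <- sum_gs. apply sum_eq. intros j _.
   unfold F. rewrite vnorm_scal, Cmod_pow, Gc_norm. fold d1 d2. destruct (Nat.leb j k); ring. }
 assert (Hrow : forall k, vser (F k) (pterm_c a z0 z k)).
 { intro k. replace (pterm_c a z0 z k) with (vsum (F k) k).
   apply vser_finite. intros j Hj. unfold F, Gc. rewrite (proj2 (Nat.leb_gt j k)) by lia. apply vscal_zero.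
   unfold F, Gc, pterm_c.
   rewrite (vsum_ext _ (fun j => vscal (Cmul (RtoC (Binomial.C k j)) (Cmul (Cpow (Csub z z1) j) (Cpow (Csub z1 z0) (k - j)))) (a k))).
   rewrite vsum_scal_c, Cbinom. f_equal. f_equal. unfold Csub; cring.
   intros j Hj. rewrite (proj2 (Nat.leb_le j k)) by lia. rewrite vscal_assoc. f_equal. destruct (Csub z z1), (Csub z1 z0). cring. }
 assert (Hcol : forall j, vser (fun k => F k j) (vscal (Cpow (Csub z z1) j) (bc z1 j))).
 { intro j. apply vser_scal. apply bc_spec; auto. }
 destruct (fubini F _ _ _ HB Hrow Hcol) as [L [HL1 HL2]].
 unfold psum. rewrite (vlim_eq _ L); auto. Qed.

Lemma psum_analytic : analytic_on (Cball z0 (rr rho)) (psum a z0).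
Proof. intros z1 Hz1. unfold Cball in Hz1. exists (rr rho - Cmod (Csub z1 z0)), (bc z1). split. lra.
 intros z Hz. unfold Cball in Hz. apply recenter; auto. Qed.

End Rec.

Section Fin.
Context {X : CBanach}.
Variable T : X -> X.
Hypothesis HT : BL T.
Variable x : X.
Variable w : R -> R.
Hypothesis Hwt : is_weight w.
Variable Cx : R.
Hypothesis HCx : 0 < Cx.
Hypothesis Hbd : forall t y, exp_op_at T t x y -> vnorm y <= Cx * w t.
Variable z0 : Complex.
Variable tau : R.
Hypothesis Htau : w tau < exp (fst z0 * tau).

Let a := ak T x z0 tau.
Let R0' := R0 T z0.
Let Ha0 : R0' (a 0) = x := ak_rec0 T HT x w Hwt Cx HCx Hbd z0 tau Htau.
Let Hak : forall k, R0' (a (S k)) = vopp (a k) := ak_rec T HT x w Hwt Cx HCx Hbd z0 tau Htau.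
Let HR0 : BL R0' := R0_bl T HT z0.

Definition Rz (z : Complex) (y : X) := vsub (vscal z y) (T y).

Lemma Rz_eq z y : Rz z y = vadd (R0' y) (vscal (Csub z z0) y).
Proof. unfold Rz, R0', R0. replace z with (Cadd z0 (Csub z z0)) at 1 by (unfold Csub; cring).
 rewrite vscal_distr_c. unfold vsub. rewrite <- !vadd_assoc. f_equal. apply vadd_comm. Qed.

Lemma Rz_bl z : BL (Rz z).
Proof. apply (bl_ext (fun y => vadd (R0' y) (vscal (Csub z z0) y))). apply bl_plus; auto. apply bl_cst.
 intro; symmetry; apply Rz_eq. Qed.

Lemma Rz_partial z N : Rz z (vsum (pterm_c a z0 z) N) = vadd x (vscal (Cpow (Csub z z0) (S N)) (a N)).
Proof. set (h := Csub z z0). induction N.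
 - simpl. unfold pterm_c. fold h. simpl Cpow. rewrite vscal_1. rewrite Rz_eq, Ha0. fold h. rewrite Cmul_1r. auto.
 - simpl vsum. rewrite (bl_add (Rz z)) by apply Rz_bl. rewrite IHN. unfold pterm_c. fold h.
   rewrite (bl_scal (Rz z)) by apply Rz_bl. rewrite Rz_eq, Hak. fold h.
   rewrite vscal_distr_v, vscal_opp_v, vscal_assoc.
   rewrite <- vadd_assoc. f_equal. rewrite vadd_assoc, vadd_opp, vadd_0l.
   change (Cpow h (S (S N))) with (Cmul h (Cpow h (S N))). rewrite Cmul_comm. auto. Qed.

Theorem local_res : local_resolvent T x z0.
Proof.
 destruct (ak_bound T HT x w Hwt Cx HCx Hbd z0 tau Htau) as [rho [Hrho Hb]]. fold a in Hb.
 pose proof (K0_pos w Hwt Cx HCx) as HK0.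
 set (K := K0 w Cx) in *.
 exists (Cball z0 (rr rho)), (psum a z0). split; [|split; [|split]].
 - intros z Hz. unfold Cball in Hz. exists (rr rho - Cmod (Csub z z0)). split. lra.
   intros v Hv. unfold Cball in *. pose proof (Csub_tri v z z0). lra.
 - unfold Cball. replace (Csub z0 z0) with C0 by (unfold Csub, C0; cring). rewrite Cmod_C0. apply rr_pos; auto.
 - apply (psum_analytic a K rho HK0 Hrho Hb z0).
 - intros z Hz. unfold Cball in Hz. set (h := Csub z z0) in *.
   assert (Hh : Cmod h * rho < 1 / 2).
   { unfold rr in Hz. apply Rmult_lt_reg_r with (/ rho). apply Rinv_0_lt_compat; auto.
     rewrite Rmult_assoc, Rinv_r, Rmult_1_r by lra. rewrite Rinv_mult in Hz. lra. }
   pose proof (psum_spec a K rho HK0 Hrho Hb z0 z ltac:(fold h; lra)) as Hs.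
   pose proof (bl_vcv (Rz z) _ _ (Rz_bl z) Hs) as H1.
   apply (vcv_unique _ _ _ H1). eapply vcv_ext. { intro N; symmetry; apply Rz_partial. }
   intros e He. set (s := Cmod h * rho).
   assert (Hs0 : 0 <= s) by (unfold s; apply Rmult_le_pos; [apply Cmod_nonneg|lra]).
   destruct (pow_lt_1_zero s ltac:(rewrite Rabs_pos_eq; [unfold s; lra|auto]) (e / (K + 1))) as [N HN].
   { apply Rdiv_lt_0_compat; lra. }
   exists N. intros n Hn. rewrite vadd_comm, vadd_sub_r. fold h.
   rewrite vnorm_scal, Cmod_pow.
   eapply Rle_lt_trans. apply Rmult_le_compat_l. apply pow_le, Cmod_nonneg. apply Hb.
   specialize (HN (S n) ltac:(lia)). rewrite Rabs_pos_eq in HN by (apply pow_le; auto).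
   unfold s in HN. rewrite Rpow_mult_distr in HN.
   replace (Cmod h ^ S n * (K * rho ^ S n)) with (K * (Cmod h ^ S n * rho ^ S n)) by ring.
   apply Rle_lt_trans with ((K + 1) * (Cmod h ^ S n * rho ^ S n)).
   apply Rmult_le_compat_r. apply Rmult_le_pos; apply pow_le; [apply Cmod_nonneg|lra]. lra.
   apply Rmult_lt_reg_l with (/ (K + 1)). apply Rinv_0_lt_compat; lra.
   rewrite <- Rmult_assoc, Rinv_l, Rmult_1_l by lra. unfold Rdiv in HN. lra. Qed.

End Fin.

Theorem proposition2p2 (X : CBanach) (w : R -> R) (T : X -> X) (x : X) :
  is_regular_weight w ->
  is_bounded_linear T ->
  (exists Cx, 0 < Cx /\ forall t y, exp_op_at T t x y -> vnorm y <= Cx * w t) ->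
  forall lam : Complex, local_spectrum T x lam -> Re lam = 0.
Proof. intros Hreg HT [Cx [HCx Hbd]] lam Hsp.
 apply NNPP. intro Hre.
 destruct (weight_any w Hreg (Re lam) Hre) as [tau Htau].
 apply Hsp. apply (local_res T HT x w (proj1 Hreg) Cx HCx Hbd lam tau). exact Htau. Qed.
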